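(* Let $m\in\mathbb{N}$, let $\alpha,\beta,\mu\in\mathbb{C}$ with $\alpha,\frac{1+\alpha+\beta}{2}\notin\mathbb{Z}_0^-$, $\Re(\beta)>0$ and $\Re(\mu)>0$. Then \[ \int_0^\infty t^{\beta-1}e^{-\mu t}\,{}_2F_2\left[\begin{array}{r} -m,\ \alpha;\\ -2m,\ \tfrac{1+\alpha+\beta}{2};\end{array}\mu t\right]_m dt=\frac{\Gamma(\beta)}{\mu^{\beta}}\frac{\left(\frac{1+\alpha}{2}\right)_m\left(\frac{1+\beta}{2}\right)_m}{\left(\frac{1}{2}\right)_m\left(\frac{1+\alpha+\beta}{2}\right)_m}. \]
   Context: $\mathbb{N}=\{1,2,3,\dots\}$, $\mathbb{Z}_0^-=\{0,-1,-2,\dots\}$. For $a\in\mathbb{C}$ and $n\in\mathbb{N}_0$, $(a)_0=1$ and $(a)_n=a(a+1)\cdots(a+n-1)$. For $N\in\mathbb{N}_0$, the truncated series is ${}_2F_2\left[\begin{array}{r} a_1,a_2;\\ b_1,b_2;\end{array}z\right]_N=\sum_{n=0}^{N}\frac{(a_1)_n(a_2)_n}{(b_1)_n(b_2)_n}\frac{z^n}{n!}$ (first $N+1$ terms). The left side is the Mellin transform $\int_0^\infty t^{s-1}f(t)\,dt$ at $s=\beta$; $\mu^{\beta}$ denotes the principal power. *)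

(* Defs.v *)
From Stdlib Require Import Reals List Arith Factorial.
From Coquelicot Require Import Coquelicot.
Open Scope R_scope.

Definition Cexp (z : C) : C :=
  (exp (fst z) * cos (snd z), exp (fst z) * sin (snd z)).

(* principal argument, in (-PI, PI] (0 for z = 0) *)
Definition Carg (z : C) : R :=
  let x := fst z in let y := snd z in
  if Rlt_dec 0 x then atan (y / x)
  else if Rlt_dec x 0 then
    (if Rle_dec 0 y then atan (y / x) + PI else atan (y / x) - PI)
  else if Rlt_dec 0 y then PI / 2
  else if Rlt_dec y 0 then - (PI / 2)
  else 0.

Definition CLog (z : C) : C := (ln (Cmod z), Carg z).

(* principal power z^w (0^w := 0) *)
Definition Cpowc (z w : C) : C :=
  if Ceq_dec z 0 then 0%C else Cexp (w * CLog z)%C.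

Fixpoint poch (a : C) (n : nat) : C :=
  match n with
  | O => 1%C
  | S k => (poch a k * (a + RtoC (INR k)))%C
  end.

(* truncated 2F2: first N+1 terms *)
Definition F22_trunc (a1 a2 b1 b2 z : C) (N : nat) : C :=
  fold_right Cplus 0%C
    (map (fun n => (poch a1 n * poch a2 n / (poch b1 n * poch b2 n)
                     * Cpow z n / RtoC (INR (fact n)))%C)
         (seq 0 (S N))).

Definition CGamma (s : C) : C :=
  @RInt_gen C_R_CompleteNormedModule
    (fun t => (Cpowc (RtoC t) (s - 1) * RtoC (exp (- t)))%C)
    (at_right 0) (Rbar_locally p_infty).

(* Main.v *)
Require Import Defs.
From Stdlib Require Import Reals Lra Lia List Arith Factorial.
From Coquelicot Require Import Coquelicot.
Open Scope R_scope.

Lemma C_ext (z w : C) : fst z = fst w -> snd z = snd w -> z = w.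
Proof. destruct z, w; simpl; intros; subst; reflexivity. Qed.

Lemma normC (x : C) : @norm _ C_R_NormedModule x = Cmod x.
Proof.
  unfold norm; simpl; unfold prod_norm, Cmod; simpl. f_equal.
  change (@norm _ R_NormedModule (fst x)) with (Rabs (fst x)).
  change (@norm _ R_NormedModule (snd x)) with (Rabs (snd x)).
  rewrite !Rmult_1_r, <- !Rabs_mult, !Rabs_right; try nra.
Qed.

Lemma plusC (x y : C) : @plus C_R_NormedModule x y = Cplus x y.
Proof. reflexivity. Qed.
Lemma minusC (x y : C) : @minus C_R_NormedModule x y = Cminus x y.
Proof. reflexivity. Qed.
Lemma oppC (x : C) : @opp C_R_NormedModule x = Copp x.
Proof. reflexivity. Qed.
Lemma zeroC : @zero C_R_NormedModule = RtoC 0.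
Proof. reflexivity. Qed.
Lemma scalC (k : R) (y : C) : @scal _ C_R_NormedModule k y = Cmult (RtoC k) y.
Proof.
  apply C_ext; destruct y; simpl; unfold prod_scal; simpl;
  unfold scal; simpl; unfold mult; simpl; ring.
Qed.

Lemma C_decomp (z : C) :
  z = @plus C_R_NormedModule (@scal _ C_R_NormedModule (fst z) (RtoC 1))
        (@scal _ C_R_NormedModule (snd z) Ci).
Proof.
  rewrite plusC, !scalC. apply C_ext; destruct z; simpl; ring.
Qed.

Lemma Cexp_add (a b : C) : Cexp (a + b)%C = (Cexp a * Cexp b)%C.
Proof.
  unfold Cexp; apply C_ext; simpl; rewrite exp_plus; 
  [rewrite cos_plus | rewrite sin_plus]; ring.
Qed.

Lemma Cmod_Cexp (z : C) : Cmod (Cexp z) = exp (fst z).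
Proof.
  unfold Cexp, Cmod; cbn [fst snd].
  replace ((exp (fst z) * cos (snd z)) ^ 2 + (exp (fst z) * sin (snd z)) ^ 2)
    with (exp (fst z) ^ 2).
  2:{ assert (H := sin2_cos2 (snd z)); unfold Rsqr in H.
    transitivity (exp (fst z) ^ 2 * (sin (snd z) * sin (snd z) + cos (snd z) * cos (snd z))); [rewrite H; ring | ring]. }
  rewrite sqrt_pow2; auto. left; apply exp_pos.
Qed.

Lemma Cexp_RtoC (x : R) : Cexp (RtoC x) = RtoC (exp x).
Proof. unfold Cexp; apply C_ext; simpl; rewrite ?cos_0, ?sin_0; ring. Qed.

Lemma Cexp_neq0 (z : C) : Cexp z <> RtoC 0.
Proof.
  intro H. assert (Cmod (Cexp z) = 0) by (rewrite H; apply Cmod_0).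
  rewrite Cmod_Cexp in H0. generalize (exp_pos (fst z)); lra.
Qed.

Lemma is_derive_eqv {K : AbsRing} {V : NormedModule K} (f : K -> V) x l l' :
  is_derive f x l -> l = l' -> is_derive f x l'.
Proof. intros H <-; exact H. Qed.

Lemma is_derive_C (f : R -> C) x (l : C) :
  is_derive (fun t => fst (f t)) x (fst l) ->
  is_derive (fun t => snd (f t)) x (snd l) ->
  @is_derive R_AbsRing C_R_NormedModule f x l.
Proof.
  intros H1 H2.
  apply (is_derive_ext (fun t => @plus C_R_NormedModule
          (@scal _ C_R_NormedModule (fst (f t)) (RtoC 1))
          (@scal _ C_R_NormedModule (snd (f t)) Ci))).
  { intro t; symmetry; apply C_decomp. }
  rewrite (C_decomp l).
  apply (@is_derive_plus R_AbsRing C_R_NormedModule);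
  apply (@is_derive_scal_l R_AbsRing C_R_NormedModule); assumption.
Qed.

Lemma is_derive_fstC (f : R -> C) x (l : C) :
  @is_derive R_AbsRing C_R_NormedModule f x l ->
  is_derive (fun t => fst (f t)) x (fst l).
Proof.
  intro H. unfold is_derive in *.
  eapply filterdiff_ext_lin.
  - apply (filterdiff_comp f (@fst R R) _ (@fst R R) H).
    apply filterdiff_linear, (@is_linear_fst R_AbsRing R_NormedModule R_NormedModule).
  - intro y; simpl. reflexivity.
Qed.

Lemma is_derive_sndC (f : R -> C) x (l : C) :
  @is_derive R_AbsRing C_R_NormedModule f x l ->
  is_derive (fun t => snd (f t)) x (snd l).
Proof.
  intro H. unfold is_derive in *.
  eapply filterdiff_ext_lin.
  - apply (filterdiff_comp f (@snd R R) _ (@snd R R) H).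
    apply filterdiff_linear, (@is_linear_snd R_AbsRing R_NormedModule R_NormedModule).
  - intro y; simpl. reflexivity.
Qed.

Lemma Rderive_const (c : R) x : is_derive (fun _ : R => c) x 0.
Proof. apply (@is_derive_const R_AbsRing R_NormedModule). Qed.

Lemma Rderive_mult (f g : R -> R) x a b :
  is_derive f x a -> is_derive g x b ->
  is_derive (fun t => f t * g t) x (a * g x + f x * b).
Proof.
  intros Ha Hb. apply (is_derive_mult f g x a b Ha Hb). intros; apply Rmult_comm.
Qed.

Lemma Rderive_plus (f g : R -> R) x a b :
  is_derive f x a -> is_derive g x b ->
  is_derive (fun t => f t + g t) x (a + b).
Proof. intros Ha Hb. apply (is_derive_plus f g x a b Ha Hb). Qed.

Lemma Rderive_minus (f g : R -> R) x a b :
  is_derive f x a -> is_derive g x b ->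
  is_derive (fun t => f t - g t) x (a - b).
Proof. intros Ha Hb. apply (is_derive_minus f g x a b Ha Hb). Qed.

Lemma Rderive_comp (f g : R -> R) x a b :
  is_derive f (g x) a -> is_derive g x b ->
  is_derive (fun t => f (g t)) x (a * b).
Proof.
  intros Ha Hb. eapply is_derive_eqv. apply (is_derive_comp f g x a b Ha Hb).
  simpl. unfold scal; simpl; unfold mult; simpl. ring.
Qed.

Lemma is_derive_Cmult (f g : R -> C) x (a b : C) :
  @is_derive R_AbsRing C_R_NormedModule f x a ->
  @is_derive R_AbsRing C_R_NormedModule g x b ->
  @is_derive R_AbsRing C_R_NormedModule (fun t => (f t * g t)%C) x
     (a * g x + f x * b)%C.
Proof.
  intros Ha Hb.
  assert (Ha1 := is_derive_fstC _ _ _ Ha). assert (Ha2 := is_derive_sndC _ _ _ Ha).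
  assert (Hb1 := is_derive_fstC _ _ _ Hb). assert (Hb2 := is_derive_sndC _ _ _ Hb).
  apply is_derive_C; simpl.
  - eapply is_derive_eqv.
    apply Rderive_minus; apply Rderive_mult; eassumption.
    simpl; ring.
  - eapply is_derive_eqv.
    apply Rderive_plus; apply Rderive_mult; eassumption.
    simpl; ring.
Qed.

Lemma is_derive_Cexp (z : R -> C) x (z' : C) :
  @is_derive R_AbsRing C_R_NormedModule z x z' ->
  @is_derive R_AbsRing C_R_NormedModule (fun t => Cexp (z t)) x (Cexp (z x) * z')%C.
Proof.
  intros Hz.
  assert (H1 := is_derive_fstC _ _ _ Hz). assert (H2 := is_derive_sndC _ _ _ Hz).
  assert (E1 := Rderive_comp exp (fun t => fst (z t)) x _ _ (is_derive_exp _) H1).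
  assert (C1 := Rderive_comp cos (fun t => snd (z t)) x _ _ (is_derive_cos _) H2).
  assert (S1 := Rderive_comp sin (fun t => snd (z t)) x _ _ (is_derive_sin _) H2).
  apply is_derive_C; unfold Cexp; simpl.
  - eapply is_derive_eqv. apply Rderive_mult; eassumption. simpl; ring.
  - eapply is_derive_eqv. apply Rderive_mult; eassumption. simpl; ring.
Qed.

Lemma is_derive_RtoC (f : R -> R) x a :
  is_derive f x a ->
  @is_derive R_AbsRing C_R_NormedModule (fun t => RtoC (f t)) x (RtoC a).
Proof.
  intro H. apply is_derive_C; simpl. exact H. apply Rderive_const.
Qed.

Lemma is_derive_Cconst_mult (f : R -> C) x (a c : C) :
  @is_derive R_AbsRing C_R_NormedModule f x a ->
  @is_derive R_AbsRing C_R_NormedModule (fun t => (c * f t)%C) x (c * a)%C.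
Proof.
  intro H. eapply is_derive_eqv.
  apply (is_derive_Cmult (fun _ => c) f x 0%C a); [|exact H].
  apply is_derive_C; simpl; apply Rderive_const.
  match goal with |- ?a = ?b => change (@eq C a b) end; ring.
Qed.

Lemma is_derive_Cplus (f g : R -> C) x (a b : C) :
  @is_derive R_AbsRing C_R_NormedModule f x a ->
  @is_derive R_AbsRing C_R_NormedModule g x b ->
  @is_derive R_AbsRing C_R_NormedModule (fun t => (f t + g t)%C) x (a + b)%C.
Proof. intros. apply (@is_derive_plus R_AbsRing C_R_NormedModule); assumption. Qed.

Ltac Cring := match goal with |- ?a = ?b => change (@eq C a b) end; ring.
Ltac Cfield := match goal with |- ?a = ?b => change (@eq C a b) end; field.

Lemma is_RInt_eqv {V : NormedModule R_AbsRing} (f : R -> V) a b l l' :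
  is_RInt f a b l -> l = l' -> is_RInt f a b l'.
Proof. intros H <-; exact H. Qed.

Lemma is_RInt_Cmult (f : R -> C) a b (l c : C) :
  @is_RInt C_R_NormedModule f a b l ->
  @is_RInt C_R_NormedModule (fun t => (c * f t)%C) a b (c * l)%C.
Proof.
  intro H.
  assert (H1 := @is_RInt_fct_extend_fst R_NormedModule R_NormedModule f a b l H).
  assert (H2 := @is_RInt_fct_extend_snd R_NormedModule R_NormedModule f a b l H).
  replace (c * l)%C with (fst c * fst l - snd c * snd l, fst c * snd l + snd c * fst l)
    by (apply C_ext; simpl; ring).
  apply (@is_RInt_fct_extend_pair R_NormedModule R_NormedModule).
  - eapply is_RInt_ext.
    2:{ eapply is_RInt_eqv.
        apply (@is_RInt_minus R_NormedModule);
        apply (@is_RInt_scal R_NormedModule); [exact H1 | exact H2].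
        reflexivity. }
    intros x _. simpl. unfold scal, minus, plus, opp; simpl.
    unfold mult, plus, opp; simpl. ring.
  - eapply is_RInt_ext.
    2:{ eapply is_RInt_eqv.
        apply (@is_RInt_plus R_NormedModule);
        apply (@is_RInt_scal R_NormedModule); [exact H2 | exact H1].
        reflexivity. }
    intros x _. simpl. unfold scal, plus; simpl.
    unfold mult, plus; simpl. ring.
Qed.

Lemma Cmult_linear (c : C) :
  @is_linear R_AbsRing C_R_NormedModule C_R_NormedModule (fun y => (c * y)%C).
Proof.
  split.
  - intros x y. cbv beta. change (c * (x + y) = (c * x) + (c * y))%C. ring.
  - intros k x. cbv beta. rewrite !scalC. Cring.
  - exists (Cmod c + 1). split. generalize (Cmod_ge_0 c); lra.
    intro x. rewrite (normC (c * x)%C), (normC x), Cmod_mult.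
    generalize (Cmod_ge_0 x); intros; nra.
Qed.

Lemma is_RInt_gen_lin (f g : R -> C) (L : C -> C) Fa Fb (l : C) :
  @is_linear R_AbsRing C_R_NormedModule C_R_NormedModule L ->
  Filter Fa -> Filter Fb ->
  (forall a b y, @is_RInt C_R_NormedModule f a b y -> @is_RInt C_R_NormedModule g a b (L y)) ->
  @is_RInt_gen C_R_NormedModule f Fa Fb l ->
  @is_RInt_gen C_R_NormedModule g Fa Fb (L l).
Proof.
  intros HL FFa FFb Hfg H P HP.
  assert (Hc := @linear_cont R_AbsRing C_R_NormedModule C_R_NormedModule L l HL). unfold continuous, filterlim, filter_le, filtermap in Hc.
  specialize (Hc P HP).
  specialize (H _ Hc). unfold filtermapi in *.
  eapply filter_imp; [|exact H].
  intros ab [y [Hy Py]]. exists (L y). split; auto.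
Qed.

Lemma is_RInt_gen_Cmult (f : R -> C) Fa Fb (l c : C) :
  Filter Fa -> Filter Fb ->
  @is_RInt_gen C_R_NormedModule f Fa Fb l ->
  @is_RInt_gen C_R_NormedModule (fun t => (c * f t)%C) Fa Fb (c * l)%C.
Proof.
  intros FFa FFb H.
  apply (is_RInt_gen_lin f _ (fun y => (c * y)%C) Fa Fb l (Cmult_linear c) FFa FFb); auto.
  intros. apply is_RInt_Cmult; auto.
Qed.

Definition gfun (s mu : C) (t : R) : C :=
  Cexp ((s - 1) * RtoC (ln t) - mu * RtoC t)%C.

Lemma CLog_pos (t : R) : 0 < t -> CLog (RtoC t) = RtoC (ln t).
Proof.
  intro Ht. unfold CLog, Carg. rewrite Cmod_R, Rabs_right by lra.
  simpl. destruct (Rlt_dec 0 t); [|lra].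
  replace (0 / t) with 0 by (field; lra). rewrite atan_0. reflexivity.
Qed.

Lemma Cpowc_pos (t : R) (w : C) : 0 < t -> Cpowc (RtoC t) w = Cexp (w * RtoC (ln t))%C.
Proof.
  intro Ht. unfold Cpowc. destruct (Ceq_dec (RtoC t) 0) as [E|E].
  - apply (f_equal fst) in E. simpl in E. lra.
  - rewrite CLog_pos by auto. reflexivity.
Qed.

Lemma integrand_eq (s mu : C) (t : R) : 0 < t ->
  (Cpowc (RtoC t) (s - 1) * Cexp (- (mu * RtoC t)))%C = gfun s mu t.
Proof.
  intro Ht. rewrite Cpowc_pos by auto. unfold gfun. rewrite <- Cexp_add.
  f_equal; try Cring.
Qed.

Lemma gamma_integrand_eq (s : C) (t : R) : 0 < t ->
  (Cpowc (RtoC t) (s - 1) * RtoC (exp (- t)))%C = gfun s (RtoC 1) t.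
Proof.
  intro Ht. rewrite <- integrand_eq by auto. f_equal.
  rewrite <- Cexp_RtoC. f_equal. apply C_ext; simpl; ring.
Qed.

Lemma gfun_succ (s mu : C) (t : R) : 0 < t ->
  gfun (s + 1) mu t = (gfun s mu t * RtoC t)%C.
Proof.
  intro Ht. unfold gfun.
  replace (RtoC t) with (Cexp (RtoC (ln t))) at 3 by (rewrite Cexp_RtoC, exp_ln; auto).
  rewrite <- Cexp_add. f_equal; try Cring.
Qed.

Lemma gfun_pow (s mu : C) (t : R) (n : nat) : 0 < t ->
  (gfun s mu t * Cpow (RtoC t) n)%C = gfun (s + RtoC (INR n)) mu t.
Proof.
  intro Ht. induction n.
  - simpl. replace (s + RtoC 0)%C with s by Cring. Cring.
  - rewrite S_INR, RtoC_plus.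
    replace (s + (RtoC (INR n) + RtoC 1))%C with ((s + RtoC (INR n)) + 1)%C by Cring.
    rewrite gfun_succ by auto. rewrite <- IHn. simpl. Cring.
Qed.

Lemma Cmod_gfun (s mu : C) (t : R) :
  Cmod (gfun s mu t) = exp ((fst s - 1) * ln t - fst mu * t).
Proof. unfold gfun. rewrite Cmod_Cexp. f_equal. simpl. ring. Qed.

Lemma Rderive_id x : is_derive (fun t : R => t) x 1.
Proof. apply (@is_derive_id R_AbsRing). Qed.

Lemma is_derive_gfun_exp (s mu : C) (t : R) : 0 < t ->
  @is_derive R_AbsRing C_R_NormedModule (gfun s mu) t
    (gfun s mu t * ((s - 1) * RtoC (/ t) - mu))%C.
Proof.
  intro Ht. unfold gfun. apply is_derive_Cexp.
  eapply is_derive_eqv.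
  apply (@is_derive_minus R_AbsRing C_R_NormedModule).
  apply is_derive_Cconst_mult, is_derive_RtoC, is_derive_ln; auto.
  apply is_derive_Cconst_mult, is_derive_RtoC, Rderive_id.
  rewrite minusC. Cring.
Qed.

Lemma continuous_gfun (s mu : C) (t : R) : 0 < t ->
  @continuous R_UniformSpace C_R_NormedModule (gfun s mu) t.
Proof.
  intro Ht. apply (@ex_derive_continuous R_AbsRing C_R_NormedModule).
  eexists. apply is_derive_gfun_exp; auto.
Qed.

Lemma is_derive_gfun_succ (s mu : C) (t : R) : 0 < t ->
  @is_derive R_AbsRing C_R_NormedModule (gfun (s + 1) mu) t
    (s * gfun s mu t - mu * gfun (s + 1) mu t)%C.
Proof.
  intro Ht. eapply is_derive_eqv. apply is_derive_gfun_exp; auto.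
  rewrite gfun_succ by auto. rewrite RtoC_inv by lra.
  replace (s + 1 - 1)%C with s by Cring.

  Cfield. intro E. apply (f_equal fst) in E. simpl in E. lra.
Qed.

Lemma ballR (x y eps : R) : ball x eps y <-> Rabs (y - x) < eps.
Proof. reflexivity. Qed.

Lemma filterlim_ball {T} (F : (T -> Prop) -> Prop) (h : T -> R) (L : R) (eps : posreal) :
  filterlim h F (locally L) -> F (fun x => Rabs (h x - L) < eps).
Proof.
  intro H. apply (H (fun y => Rabs (y - L) < eps)). exists eps. intros y Hy. exact Hy.
Qed.

Lemma at_right_pos : at_right 0 (fun a => 0 < a).
Proof. exists (mkposreal 1 Rlt_0_1). intros; auto. Qed.

Lemma at_right_lt1 : at_right 0 (fun a => a < 1).
Proof.
  exists (mkposreal 1 Rlt_0_1). intros y Hy _. 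
  assert (Hy2 : Rabs (y - 0) < 1) by exact Hy. apply Rabs_def2 in Hy2. lra.
Qed.

Lemma norm_bound_swap (f : R -> C) (h H : R -> R) (D : R -> Prop) x y (I : C) :
  D x -> D y ->
  (forall t, Rmin x y <= t <= Rmax x y -> Cmod (f t) <= h t) ->
  (forall x y, D x -> D y -> x <= y -> is_RInt h x y (H y - H x)) ->
  @is_RInt C_R_NormedModule f x y I -> Cmod I <= Rabs (H y - H x).
Proof.
  intros Dx Dy Hb Hh HI.
  destruct (Rle_dec x y) as [Hxy|Hxy].
  - rewrite <- normC.
    apply Rle_trans with (H y - H x); [|apply Rle_abs].
    apply (norm_RInt_le f h x y I (H y - H x) Hxy); auto.
    intros t Ht. rewrite normC. apply Hb. rewrite Rmin_left, Rmax_right; lra.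
  - assert (Hyx : y <= x) by lra.
    apply is_RInt_swap in HI.
    rewrite <- Cmod_opp, <- normC.
    apply Rle_trans with (H x - H y); [|rewrite Rabs_minus_sym; apply Rle_abs].
    apply (norm_RInt_le f h y x _ (H x - H y) Hyx); auto.
    intros t Ht. rewrite normC. apply Hb. rewrite Rmin_right, Rmax_left; lra.
Qed.

Lemma ex_RInt_gen_bound (f : R -> C) (h1 h2 H1 H2 : R -> R) (L1 L2 : R) :
  (forall t, 0 < t -> @continuous R_UniformSpace C_R_NormedModule f t) ->
  (forall t, 0 < t <= 1 -> Cmod (f t) <= h1 t) ->
  (forall t, 1 <= t -> Cmod (f t) <= h2 t) ->
  (forall x y, 0 < x <= 1 -> 0 < y <= 1 -> x <= y -> is_RInt h1 x y (H1 y - H1 x)) ->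
  (forall x y, 1 <= x -> 1 <= y -> x <= y -> is_RInt h2 x y (H2 y - H2 x)) ->
  filterlim H1 (at_right 0) (locally L1) ->
  filterlim H2 (Rbar_locally p_infty) (locally L2) ->
  exists l, @is_RInt_gen C_R_NormedModule f (at_right 0) (Rbar_locally p_infty) l.
Proof.
  intros Hc Hb1 Hb2 Hh1 Hh2 HL1 HL2.
  assert (Hex : forall a b, 0 < a -> 0 < b -> exists I, @is_RInt C_R_NormedModule f a b I).
  { intros a b Ha Hb. apply (@ex_RInt_continuous C_R_CompleteNormedModule).
    intros z Hz. apply Hc. apply Rlt_le_trans with (Rmin a b); [|apply Hz].
    apply Rmin_glb_lt; auto. }
  assert (Huniq : forall a b I J, @is_RInt C_R_NormedModule f a b I ->
                    @is_RInt C_R_NormedModule f a b J -> I = J).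
  { intros a b I J HI HJ.
    rewrite <- (@is_RInt_unique C_R_CompleteNormedModule f a b I HI).
    rewrite <- (@is_RInt_unique C_R_CompleteNormedModule f a b J HJ). reflexivity. }
  assert (PF : ProperFilter (filter_prod (at_right 0) (Rbar_locally p_infty))).
  { exact (@filter_prod_proper _ _ _ _ (at_right_proper_filter 0) (Rbar_locally_filter p_infty)). }
  assert (Hcau := @filterlimi_locally_cauchy (R*R) C_R_CompleteNormedModule _ PF
     (fun ab y => @is_RInt C_R_NormedModule f (fst ab) (snd ab) y)).
  assert (Hev : filter_prod (at_right 0) (Rbar_locally p_infty)
    (fun x => (exists y, @is_RInt C_R_NormedModule f (fst x) (snd x) y) /\
       (forall y1 y2, @is_RInt C_R_NormedModule f (fst x) (snd x) y1 ->
          @is_RInt C_R_NormedModule f (fst x) (snd x) y2 -> y1 = y2))).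
  { apply Filter_prod with (fun a => 0 < a) (fun b => 0 < b).
    apply at_right_pos. exists 0; auto.
    intros a b Ha Hb; simpl. split.
    + apply Hex; auto.
    + intros; eapply Huniq; eauto. }
  destruct (proj1 (Hcau Hev)) as [l Hl].
  - intro eps.
    assert (He4 : 0 < eps / 4) by (generalize (cond_pos eps); lra).
    set (e4 := mkposreal _ He4).
    assert (HA := filterlim_ball _ H1 L1 e4 HL1).
    assert (HB := filterlim_ball _ H2 L2 e4 HL2).
    exists (fun ab => (0 < fst ab /\ fst ab < 1 /\ Rabs (H1 (fst ab) - L1) < e4) /\
                 (1 < snd ab /\ Rabs (H2 (snd ab) - L2) < e4)).
    split.
    + apply Filter_prod with (fun a => 0 < a /\ a < 1 /\ Rabs (H1 a - L1) < e4)
                             (fun b => 1 < b /\ Rabs (H2 b - L2) < e4).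
      * apply filter_and; [apply at_right_pos | apply filter_and; [apply at_right_lt1 | exact HA]].
      * apply filter_and; [exists 1; auto | exact HB].
      * intros; simpl; tauto.
    + intros [a b] [a' b'] [[Ha1 [Ha2 Ha3]] [Hb1' Hb2']] [[Ha1' [Ha2' Ha3']] [Hb1'' Hb2'']] y1 y2 Hy1 Hy2.
      simpl in *.
      destruct (Hex a' a) as [I1 HI1]; try lra.
      destruct (Hex b b') as [I2 HI2]; try lra.
      assert (Hy2' : @is_RInt C_R_NormedModule f a' b' (I1 + (y1 + I2))%C).
      { exact (@is_RInt_Chasles C_R_NormedModule f a' a b' I1 _ HI1
                 (@is_RInt_Chasles C_R_NormedModule f a b b' y1 I2 Hy1 HI2)). }
      rewrite (Huniq _ _ _ _ Hy2 Hy2').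
      apply (@norm_compat1 R_AbsRing C_R_NormedModule). rewrite normC, minusC.
      replace (I1 + (y1 + I2) - y1)%C with (I1 + I2)%C by Cring.
      assert (B1 : Cmod I1 <= Rabs (H1 a - H1 a')).
      { apply (norm_bound_swap f h1 H1 (fun t => 0 < t <= 1)); try lra.
        - intros t Ht. apply Hb1. split.
          + apply Rlt_le_trans with (Rmin a' a); [apply Rmin_glb_lt; lra | apply Ht].
          + apply Rle_trans with (Rmax a' a); [apply Ht | apply Rmax_lub; lra].
        - intros x y Hx Hy Hxy. apply Hh1; auto.
        - exact HI1. }
      assert (B2 : Cmod I2 <= Rabs (H2 b' - H2 b)).
      { apply (norm_bound_swap f h2 H2 (fun t => 1 <= t)); try lra.
        - intros t Ht. apply Hb2.
          apply Rle_trans with (Rmin b b'); [apply Rmin_glb; lra | apply Ht].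
        - intros x y Hx Hy Hxy. apply Hh2; auto.
        - exact HI2. }
      apply Rle_lt_trans with (Cmod I1 + Cmod I2); [apply Cmod_triangle|].
      assert (Rabs (H1 a - H1 a') < eps / 2).
      { replace (H1 a - H1 a') with ((H1 a - L1) + - (H1 a' - L1)) by ring.
        eapply Rle_lt_trans; [apply Rabs_triang|]. rewrite Rabs_Ropp. lra. }
      assert (Rabs (H2 b' - H2 b) < eps / 2).
      { simpl in Hb2', Hb2''.
        replace (H2 b' - H2 b) with ((H2 b' - L2) + - (H2 b - L2)) by ring.
        eapply Rle_lt_trans; [apply Rabs_triang|]. rewrite Rabs_Ropp. lra. }
      lra.
  - exists l. exact Hl.
Qed.

Lemma exp_le (x y : R) : x <= y -> exp x <= exp y.
Proof. intro H. destruct H as [H|H]; [left; apply exp_increasing; auto | rewrite H; lra]. Qed.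

Lemma ln_le_lin (t : R) : 0 < t -> ln t <= t - 1.
Proof. intro Ht. generalize (exp_ineq1_le (ln t)). rewrite exp_ln; lra. Qed.

Lemma ln_lin_bound (c b : R) : 0 < b ->
  exists M, forall t, 1 <= t -> c * ln t - b * t <= M.
Proof.
  intro Hb. set (c' := Rabs c + 1).
  assert (Hc' : 0 < c') by (unfold c'; generalize (Rabs_pos c); lra).
  exists (- c' - c' * ln (b / c')). intros t Ht.
  assert (Hlt : 0 <= ln t) by (rewrite <- ln_1; destruct Ht as [Ht|Ht]; [left; apply ln_increasing; lra| rewrite Ht; lra]).
  assert (H1 : c * ln t <= c' * ln t).
  { unfold c'. apply Rmult_le_compat_r; auto. generalize (Rle_abs c); lra. }
  assert (Hd : 0 < b / c') by (apply Rdiv_lt_0_compat; auto).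
  assert (H2 := ln_le_lin (b / c' * t) ltac:(apply Rmult_lt_0_compat; lra)).
  rewrite ln_mult in H2 by lra.
  assert (H3 : c' * (ln (b / c') + ln t) <= c' * (b / c' * t - 1)) by (apply Rmult_le_compat_l; lra).
  replace (c' * (b / c' * t - 1)) with (b * t - c') in H3 by (field; lra).
  lra.
Qed.

Lemma filterlim_le0 {T} (F : (T -> Prop) -> Prop) {FF : Filter F} (g h : T -> R) :
  F (fun t => 0 <= g t <= h t) -> filterlim h F (locally 0) -> filterlim g F (locally 0).
Proof.
  intros Hgh Hh. apply filterlim_locally. intro eps.
  apply filterlim_locally with (eps := eps) in Hh.
  generalize (filter_and _ _ Hgh Hh). apply filter_imp.
  intros x [H1 H2]. change (Rabs (g x - 0) < eps). change (Rabs (h x - 0) < eps) in H2.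
  rewrite Rminus_0_r in *. rewrite Rabs_right in * by lra. lra.
Qed.

Lemma lim_exp_m : filterlim exp (Rbar_locally m_infty) (locally 0).
Proof. exact is_lim_exp_m. Qed.

Lemma lim_cln_0 (c : R) : 0 < c ->
  filterlim (fun t => c * ln t) (at_right 0) (Rbar_locally m_infty).
Proof.
  intros Hc P [M HM].
  assert (H := is_lim_ln_0 (fun y => y < M / c)).
  unfold filtermap. eapply filter_imp; [|apply H].
  - intros x Hx. apply HM. apply Rmult_lt_reg_l with (/ c). apply Rinv_0_lt_compat; auto.
    replace (/ c * (c * ln x)) with (ln x) by (field; lra).
    replace (/ c * M) with (M / c) by (unfold Rdiv; ring). exact Hx.
  - exists (M / c). auto.
Qed.

Lemma lim_lin_m (b : R) : 0 < b ->
  filterlim (fun t => - b * t) (Rbar_locally p_infty) (Rbar_locally m_infty).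
Proof.
  intros Hb P [M HM]. exists (- M / b). intros x Hx. apply HM.
  apply Rmult_lt_compat_l with (r := b) in Hx; auto.
  replace (b * (- M / b)) with (- M) in Hx by (field; lra). lra.
Qed.

Lemma lim_pow_0 (c : R) : 0 < c ->
  filterlim (fun t => exp (c * ln t)) (at_right 0) (locally 0).
Proof.
  intro Hc. eapply filterlim_comp. apply lim_cln_0; auto. apply lim_exp_m.
Qed.

Lemma lim_expm_p (b : R) : 0 < b ->
  filterlim (fun t => exp (- b * t)) (Rbar_locally p_infty) (locally 0).
Proof.
  intro Hb. eapply filterlim_comp. apply lim_lin_m; auto. apply lim_exp_m.
Qed.

Lemma lim_powexp_p (c b : R) : 0 < b ->
  filterlim (fun t => exp (c * ln t - b * t)) (Rbar_locally p_infty) (locally 0).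
Proof.
  intro Hb. destruct (ln_lin_bound c (b / 2)) as [M HM]. lra.
  apply (filterlim_le0 _ _ (fun t => exp M * exp (- (b / 2) * t))).
  - exists 1. intros t Ht. split. left; apply exp_pos.
    rewrite <- exp_plus. apply exp_le. specialize (HM t ltac:(lra)). lra.
  - replace 0 with (exp M * 0) by ring.
    apply (filterlim_comp _ _ _ (fun t => exp (- (b / 2) * t)) (fun y => exp M * y) _ (locally 0)).
    apply lim_expm_p; lra.
    apply (continuous_mult (fun _ => exp M) (fun y => y) 0).
    apply continuous_const. apply continuous_id.
Qed.

Lemma lim_scal0 {T} (F : (T -> Prop) -> Prop) {FF : Filter F} (g : T -> R) (k : R) :
  filterlim g F (locally 0) -> filterlim (fun t => k * g t) F (locally 0).
Proof.
  intro H. replace 0 with (k * 0) by ring.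
  apply (filterlim_comp _ _ _ g (fun y => k * y) _ (locally 0)); auto.
  apply (continuous_mult (fun _ => k) (fun y => y) 0).
  apply continuous_const. apply continuous_id.
Qed.

Lemma ex_gfun (s mu : C) : 0 < fst s -> 0 < fst mu ->
  exists l, @is_RInt_gen C_R_NormedModule (gfun s mu) (at_right 0) (Rbar_locally p_infty) l.
Proof.
  intros Hs Hm.
  destruct (ln_lin_bound (fst s - 1) (fst mu / 2)) as [M HM]. lra.
  apply (ex_RInt_gen_bound (gfun s mu)
     (fun t => exp ((fst s - 1) * ln t))
     (fun t => exp M * exp (- (fst mu / 2) * t))
     (fun t => / fst s * exp (fst s * ln t))
     (fun t => - (2 / fst mu) * exp M * exp (- (fst mu / 2) * t)) 0 0).
  - intros; apply continuous_gfun; auto.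
  - intros t Ht. rewrite Cmod_gfun. apply exp_le.
    assert (0 <= fst mu * t) by (apply Rmult_le_pos; lra). lra.
  - intros t Ht. rewrite Cmod_gfun. rewrite <- exp_plus. apply exp_le.
    specialize (HM t Ht). lra.
  - intros x y Hx Hy Hxy.
    apply (@is_RInt_derive R_CompleteNormedModule (fun t => / fst s * exp (fst s * ln t))
       (fun t => exp ((fst s - 1) * ln t))).
    + intros t Ht. rewrite Rmin_left, Rmax_right in Ht by lra.
      auto_derive. lra.
      replace ((fst s - 1) * ln t) with (fst s * ln t + - ln t) by ring.
      rewrite exp_plus, exp_Ropp, exp_ln by lra. field. lra.
    + intros t Ht. rewrite Rmin_left, Rmax_right in Ht by lra.
      apply continuous_exp_comp.
      apply (continuous_mult (fun _ => fst s - 1) ln t). apply continuous_const.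
      apply continuous_ln; lra.
  - intros x y Hx Hy Hxy.
    apply (@is_RInt_derive R_CompleteNormedModule 
      (fun t => - (2 / fst mu) * exp M * exp (- (fst mu / 2) * t))
      (fun t => exp M * exp (- (fst mu / 2) * t))).
    + intros t Ht. auto_derive. auto. field. lra.
    + intros t Ht. apply (continuous_mult (fun _ => exp M) (fun t => exp (- (fst mu / 2) * t)) t).
      apply continuous_const. apply continuous_exp_comp.
      apply (continuous_mult (fun _ => - (fst mu / 2)) (fun t => t) t).
      apply continuous_const. apply continuous_id.
  - apply lim_scal0. apply at_right_proper_filter. apply lim_pow_0; auto.
  - apply (filterlim_ext (fun t => (- (2 / fst mu) * exp M) * exp (- (fst mu / 2) * t))).
    intros; ring.
    apply lim_scal0. apply Rbar_locally_filter. apply lim_expm_p. lra.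
Qed.

Lemma Cmod_lim {T} (F : (T -> Prop) -> Prop) {FF : Filter F} (g : T -> C) :
  filterlim (fun t => Cmod (g t)) F (locally 0) ->
  @filterlim _ C_R_NormedModule g F (locally (RtoC 0)).
Proof.
  intro H. apply filterlim_locally. intro eps.
  apply filterlim_locally with (eps := eps) in H.
  eapply filter_imp; [|exact H]. intros x Hx.
  change (Rabs (Cmod (g x) - 0) < eps) in Hx.
  apply (@norm_compat1 R_AbsRing C_R_NormedModule).
  rewrite normC, minusC. replace (g x - RtoC 0)%C with (g x) by Cring.
  rewrite Rminus_0_r, Rabs_right in Hx; auto. apply Rle_ge, Cmod_ge_0.
Qed.

Lemma Cmod_le_abs (z : C) : Cmod z <= Rabs (fst z) + Rabs (snd z).
Proof.
  unfold Cmod. rewrite <- (sqrt_pow2 (Rabs (fst z) + Rabs (snd z))).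
  2:{ generalize (Rabs_pos (fst z)) (Rabs_pos (snd z)); lra. }
  apply sqrt_le_1_alt.
  rewrite <- (pow2_abs (fst z)), <- (pow2_abs (snd z)).
  generalize (Rabs_pos (fst z)) (Rabs_pos (snd z)); intros; nra.
Qed.

Lemma ballC (x y : C) (e : R) : @ball C_R_NormedModule x e y -> Cmod (y - x)%C < 2 * e.
Proof.
  intros [H1 H2]. change (Rabs (fst y - fst x) < e) in H1.
  change (Rabs (snd y - snd x) < e) in H2.
  eapply Rle_lt_trans. apply Cmod_le_abs.
  replace (fst (y - x)%C) with (fst y - fst x) by (simpl; ring).
  replace (snd (y - x)%C) with (snd y - snd x) by (simpl; ring). lra.
Qed.

Lemma lim_prod_diff (B : R -> C) :
  @filterlim _ C_R_NormedModule B (at_right 0) (locally (RtoC 0)) ->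
  @filterlim _ C_R_NormedModule B (Rbar_locally p_infty) (locally (RtoC 0)) ->
  @filterlim _ C_R_NormedModule (fun ab : R * R => (B (snd ab) - B (fst ab))%C)
     (filter_prod (at_right 0) (Rbar_locally p_infty)) (locally (RtoC 0)).
Proof.
  intros H0 Hi. apply filterlim_locally. intro eps.
  assert (He : 0 < eps / 4) by (generalize (cond_pos eps); lra).
  set (e2 := mkposreal _ He).
  apply filterlim_locally with (eps := e2) in H0.
  apply filterlim_locally with (eps := e2) in Hi.
  apply Filter_prod with (1 := H0) (2 := Hi).
  intros a b Ha Hb. simpl.
  apply (@norm_compat1 R_AbsRing C_R_NormedModule).
  rewrite normC, minusC. replace (B b - B a - RtoC 0)%C with ((B b - RtoC 0) + - (B a - RtoC 0))%C by Cring.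
  eapply Rle_lt_trans. apply Cmod_triangle. rewrite Cmod_opp.
  assert (Ha' := ballC _ _ _ Ha). assert (Hb' := ballC _ _ _ Hb).
  simpl in Ha', Hb'. lra.
Qed.

Lemma lim_gfun_0 (s mu : C) : 0 < fst s - 1 -> 0 <= fst mu ->
  @filterlim _ C_R_NormedModule (gfun s mu) (at_right 0) (locally (RtoC 0)).
Proof.
  intros Hs Hm. apply Cmod_lim. apply at_right_proper_filter.
  apply (filterlim_le0 _ _ (fun t => exp ((fst s - 1) * ln t))).
  - eapply filter_imp; [|apply at_right_pos]. intros t Ht.
    rewrite Cmod_gfun. split. left; apply exp_pos. apply exp_le.
    assert (0 <= fst mu * t) by (apply Rmult_le_pos; lra). lra.
  - apply lim_pow_0; auto.
Qed.

Lemma lim_gfun_inf (s mu : C) : 0 < fst mu ->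
  @filterlim _ C_R_NormedModule (gfun s mu) (Rbar_locally p_infty) (locally (RtoC 0)).
Proof.
  intros Hm. apply Cmod_lim. apply Rbar_locally_filter.
  apply (filterlim_ext (fun t => exp ((fst s - 1) * ln t - fst mu * t))).
  intro t; rewrite Cmod_gfun; auto.
  apply lim_powexp_p; auto.
Qed.

Lemma continuous_gfun_comb (a b s mu : C) (t : R) : 0 < t ->
  @continuous R_UniformSpace C_R_NormedModule
    (fun t => (a * gfun s mu t - b * gfun (s + 1) mu t)%C) t.
Proof.
  intro Ht. apply (@ex_derive_continuous R_AbsRing C_R_NormedModule).
  eexists. apply (@is_derive_minus R_AbsRing C_R_NormedModule);
  apply is_derive_Cconst_mult; apply is_derive_gfun_exp; auto.
Qed.

Lemma gfun_rec (s mu : C) (l0 l1 : C) : 0 < fst s -> 0 < fst mu ->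
  @is_RInt_gen C_R_NormedModule (gfun s mu) (at_right 0) (Rbar_locally p_infty) l0 ->
  @is_RInt_gen C_R_NormedModule (gfun (s + 1) mu) (at_right 0) (Rbar_locally p_infty) l1 ->
  (s * l0 = mu * l1)%C.
Proof.
  intros Hs Hm H0 H1.
  assert (FA := at_right_proper_filter 0).
  assert (FB := Rbar_locally_filter p_infty).
  assert (H0' := is_RInt_gen_Cmult _ _ _ _ s _ _ H0).
  assert (H1' := is_RInt_gen_Cmult _ _ _ _ mu _ _ H1).
  assert (HA := @is_RInt_gen_minus C_R_NormedModule _ _ _ _ _ _ _ _ H0' H1').
  set (f := fun t => (s * gfun s mu t - mu * gfun (s + 1) mu t)%C).
  assert (HB : @is_RInt_gen C_R_NormedModule f (at_right 0) (Rbar_locally p_infty) (RtoC 0)).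
  { unfold is_RInt_gen.
    apply (filterlimi_lim_ext_loc (fun ab : R * R => (gfun (s + 1) mu (snd ab) - gfun (s + 1) mu (fst ab))%C)).
    - apply Filter_prod with (fun a => 0 < a) (fun b => 0 < b).
      apply at_right_pos. exists 0; auto.
      intros a b Ha Hb. simpl.
      apply (@is_RInt_derive C_R_CompleteNormedModule (gfun (s + 1) mu) f).
      + intros t Ht. apply is_derive_gfun_succ.
        apply Rlt_le_trans with (Rmin a b); [apply Rmin_glb_lt; auto | apply Ht].
      + intros t Ht. apply continuous_gfun_comb.
        apply Rlt_le_trans with (Rmin a b); [apply Rmin_glb_lt; auto | apply Ht].
    - apply lim_prod_diff.
      apply lim_gfun_0. simpl; lra. lra.
      apply lim_gfun_inf; auto. }
  assert (E1 := @is_RInt_gen_unique C_R_CompleteNormedModule _ _ (Proper_StrongProper _ FA) (Proper_StrongProper _ FB) f _ HA).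
  assert (E2 := @is_RInt_gen_unique C_R_CompleteNormedModule _ _ (Proper_StrongProper _ FA) (Proper_StrongProper _ FB) f _ HB).
  rewrite E1 in E2. change (s * l0 - mu * l1 = RtoC 0)%C in E2.
  match goal with |- ?a = ?b => change (@eq C a b) end.
  transitivity ((s * l0 - mu * l1) + mu * l1)%C; [ring|]. rewrite E2. ring.
Qed.

Section Cont.
Context {U : UniformSpace}.

Lemma cont_fst (f : U -> C) x :
  @continuous U C_R_NormedModule f x -> @continuous U R_UniformSpace (fun y => fst (f y)) x.
Proof.
  intro H. apply (continuous_comp f fst x H).
  destruct (f x) as [p q]. apply (@continuous_fst R_UniformSpace R_UniformSpace).
Qed.

Lemma cont_snd (f : U -> C) x :
  @continuous U C_R_NormedModule f x -> @continuous U R_UniformSpace (fun y => snd (f y)) x.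
Proof.
  intro H. apply (continuous_comp f snd x H).
  destruct (f x) as [p q]. apply (@continuous_snd R_UniformSpace R_UniformSpace).
Qed.

Lemma cont_C (f : U -> C) x :
  @continuous U R_UniformSpace (fun y => fst (f y)) x ->
  @continuous U R_UniformSpace (fun y => snd (f y)) x ->
  @continuous U C_R_NormedModule f x.
Proof.
  intros H1 H2.
  apply (continuous_ext (fun t => @plus C_R_NormedModule
          (@scal _ C_R_NormedModule (fst (f t)) (RtoC 1))
          (@scal _ C_R_NormedModule (snd (f t)) Ci))).
  { intro t; symmetry; apply C_decomp. }
  apply (@continuous_plus U R_AbsRing C_R_NormedModule);
  apply (@continuous_scal_l U R_AbsRing C_R_NormedModule); assumption.
Qed.

Lemma contR_mult (f g : U -> R) x :
  @continuous U R_UniformSpace f x -> @continuous U R_UniformSpace g x ->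
  @continuous U R_UniformSpace (fun y => f y * g y) x.
Proof. intros; apply (@continuous_mult U R_AbsRing); auto. Qed.

Lemma contR_plus (f g : U -> R) x :
  @continuous U R_UniformSpace f x -> @continuous U R_UniformSpace g x ->
  @continuous U R_UniformSpace (fun y => f y + g y) x.
Proof. intros; apply (@continuous_plus U R_AbsRing R_NormedModule); auto. Qed.

Lemma contR_minus (f g : U -> R) x :
  @continuous U R_UniformSpace f x -> @continuous U R_UniformSpace g x ->
  @continuous U R_UniformSpace (fun y => f y - g y) x.
Proof. intros; apply (@continuous_minus U R_AbsRing R_NormedModule); auto. Qed.

Lemma cont_Cmult (f g : U -> C) x :
  @continuous U C_R_NormedModule f x -> @continuous U C_R_NormedModule g x ->
  @continuous U C_R_NormedModule (fun y => (f y * g y)%C) x.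
Proof.
  intros Hf Hg. apply cont_C; simpl.
  - apply contR_minus; apply contR_mult; (apply cont_fst || apply cont_snd); auto.
  - apply contR_plus; apply contR_mult; (apply cont_fst || apply cont_snd); auto.
Qed.

Lemma cont_Cplus (f g : U -> C) x :
  @continuous U C_R_NormedModule f x -> @continuous U C_R_NormedModule g x ->
  @continuous U C_R_NormedModule (fun y => (f y + g y)%C) x.
Proof. intros; apply (@continuous_plus U R_AbsRing C_R_NormedModule); auto. Qed.

Lemma cont_Cminus (f g : U -> C) x :
  @continuous U C_R_NormedModule f x -> @continuous U C_R_NormedModule g x ->
  @continuous U C_R_NormedModule (fun y => (f y - g y)%C) x.
Proof. intros; apply (@continuous_minus U R_AbsRing C_R_NormedModule); auto. Qed.

Lemma cont_Copp (f : U -> C) x :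
  @continuous U C_R_NormedModule f x ->
  @continuous U C_R_NormedModule (fun y => (- f y)%C) x.
Proof. intros; apply (@continuous_opp U R_AbsRing C_R_NormedModule); auto. Qed.

Lemma cont_Cconst (c : C) x : @continuous U C_R_NormedModule (fun _ => c) x.
Proof. apply continuous_const. Qed.

Lemma cont_RtoC (g : U -> R) x :
  @continuous U R_UniformSpace g x -> @continuous U C_R_NormedModule (fun y => RtoC (g y)) x.
Proof. intro H. apply cont_C; simpl; auto. apply continuous_const. Qed.

Lemma cont_Cexp (f : U -> C) x :
  @continuous U C_R_NormedModule f x ->
  @continuous U C_R_NormedModule (fun y => Cexp (f y)) x.
Proof.
  intro H. assert (H1 := cont_fst f x H). assert (H2 := cont_snd f x H).
  apply cont_C; unfold Cexp; simpl; apply contR_mult.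
  - apply (continuous_comp (fun y => fst (f y)) exp); auto. apply continuous_exp.
  - apply (continuous_comp (fun y => snd (f y)) cos); auto. apply continuous_cos.
  - apply (continuous_comp (fun y => fst (f y)) exp); auto. apply continuous_exp.
  - apply (continuous_comp (fun y => snd (f y)) sin); auto. apply continuous_sin.
Qed.

End Cont.

Lemma param_R (f df : R -> R -> R) (a b x : R) :
  0 < a -> a <= b ->
  (forall u t, 0 < t -> is_derive (fun z => f z t) u (df u t)) ->
  (forall t, 0 < t -> @continuous (prod_UniformSpace R_UniformSpace R_UniformSpace) R_UniformSpace
                         (fun z => df (fst z) (snd z)) (x, t)) ->
  (forall u t, 0 < t -> @continuous R_UniformSpace R_UniformSpace (f u) t) ->
  is_derive (fun u => RInt (f u) a b) x (RInt (df x) a b).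
Proof.
  intros Ha Hab Hd Hc Hf.
  eapply is_derive_eqv.
  apply (is_derive_RInt_param f a b x).
  - apply filter_forall. intros y t Ht. exists (df y t). apply Hd.
    rewrite Rmin_left in Ht by lra. lra.
  - intros t Ht. rewrite Rmin_left in Ht by lra.
    apply continuity_2d_pt_ext_loc with df.
    + assert (Ht2 : 0 < t / 2) by lra.
      exists (mkposreal _ Ht2). intros u v Hu Hv. simpl in Hv.
      symmetry. apply is_derive_unique. apply Hd.
      apply Rabs_def2 in Hv. lra.
    + apply (continuity_2d_pt_filterlim df x t). apply Hc. lra.
  - apply filter_forall. intros y. apply (@ex_RInt_continuous R_CompleteNormedModule).
    intros z Hz. rewrite Rmin_left in Hz by lra. apply Hf. lra.
  - apply RInt_ext. intros t Ht. rewrite Rmin_left in Ht by lra.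
    apply is_derive_unique. apply Hd. lra.
Qed.

Lemma param_C (G dG : R -> R -> C) (a b x : R) :
  0 < a -> a <= b ->
  (forall u t, 0 < t -> @is_derive R_AbsRing C_R_NormedModule (fun z => G z t) u (dG u t)) ->
  (forall t, 0 < t -> @continuous (prod_UniformSpace R_UniformSpace R_UniformSpace) C_R_NormedModule
                         (fun z => dG (fst z) (snd z)) (x, t)) ->
  (forall u t, 0 < t -> @continuous R_UniformSpace C_R_NormedModule (G u) t) ->
  @is_derive R_AbsRing C_R_NormedModule
     (fun u => (RInt (fun t => fst (G u t)) a b, RInt (fun t => snd (G u t)) a b))
     x (RInt (fun t => fst (dG x t)) a b, RInt (fun t => snd (dG x t)) a b).
Proof.
  intros Ha Hab Hd Hc Hf.
  apply is_derive_C; simpl.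
  - apply (param_R (fun u t => fst (G u t)) (fun u t => fst (dG u t))); auto.
    + intros; apply is_derive_fstC; auto.
    + intros t Ht. apply (cont_fst (fun z => dG (fst z) (snd z))); auto.
    + intros u t Ht. apply (cont_fst (G u)); auto.
  - apply (param_R (fun u t => snd (G u t)) (fun u t => snd (dG u t))); auto.
    + intros; apply is_derive_sndC; auto.
    + intros t Ht. apply (cont_snd (fun z => dG (fst z) (snd z))); auto.
    + intros u t Ht. apply (cont_snd (G u)); auto.
Qed.

Lemma is_RInt_pair (f : R -> C) (a b : R) :
  (forall t, Rmin a b <= t <= Rmax a b -> @continuous R_UniformSpace C_R_NormedModule f t) ->
  @is_RInt C_R_NormedModule f a b (RInt (fun t => fst (f t)) a b, RInt (fun t => snd (f t)) a b).
Proof.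
  intro H. apply (@is_RInt_fct_extend_pair R_NormedModule R_NormedModule).
  - apply (@RInt_correct R_CompleteNormedModule). apply ex_RInt_continuous.
    intros; apply (cont_fst f); auto.
  - apply (@RInt_correct R_CompleteNormedModule). apply ex_RInt_continuous.
    intros; apply (cont_snd f); auto.
Qed.

Lemma Carg_pos (z : C) : 0 < fst z -> Carg z = atan (snd z / fst z).
Proof. intro H. unfold Carg. destruct (Rlt_dec 0 (fst z)); [reflexivity | lra]. Qed.

Lemma Cmod_pos_re (z : C) : 0 < fst z -> 0 < Cmod z.
Proof.
  intro H. apply Cmod_gt_0. intro E. rewrite E in H. simpl in H. lra.
Qed.

Lemma Cexp_CLog (z : C) : 0 < fst z -> Cexp (CLog z) = z.
Proof.
  intro Hx. destruct z as [x y]. simpl in Hx.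
  assert (Hr := Cmod_pos_re (x, y) Hx).
  unfold CLog, Cexp. simpl fst. simpl snd. rewrite Carg_pos by (simpl; lra). simpl fst; simpl snd.
  rewrite exp_ln by auto. rewrite cos_atan, sin_atan.
  assert (E : sqrt (1 + (y / x)²) = Cmod (x, y) / x).
  { rewrite <- (sqrt_Rsqr (Cmod (x, y) / x)).
    2:{ apply Rlt_le, Rdiv_lt_0_compat; auto. }
    f_equal. unfold Rsqr. unfold Cmod. simpl.
    replace (sqrt (x * (x * 1) + y * (y * 1)) / x * (sqrt (x * (x * 1) + y * (y * 1)) / x))
      with ((sqrt (x * (x * 1) + y * (y * 1)))² / (x * x)) by (unfold Rsqr; field; lra).
    rewrite Rsqr_sqrt by nra. field. lra. }
  rewrite E. apply C_ext; simpl; field; split; lra.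
Qed.

Section Rot.
Variable s mu : C.
Hypothesis Hs : 0 < fst s.
Hypothesis Hm : 0 < fst mu.

Definition w := CLog mu.
Definition nu (u : R) : C := Cexp (RtoC u * w)%C.

Lemma nu_0 : nu 0 = RtoC 1.
Proof. unfold nu. replace (RtoC 0 * w)%C with (RtoC 0) by Cring. rewrite Cexp_RtoC, exp_0. reflexivity. Qed.

Lemma nu_1 : nu 1 = mu.
Proof. unfold nu. replace (RtoC 1 * w)%C with w by Cring. apply Cexp_CLog; auto. Qed.

Lemma Cpowc_mu : Cpowc mu s = Cexp (s * w)%C.
Proof.
  unfold Cpowc. destruct (Ceq_dec mu 0) as [E|E]; [rewrite E in Hm; simpl in Hm; lra | reflexivity].
Qed.

Lemma theta_bound : - (PI / 2) < snd w < PI / 2.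
Proof.
  unfold w, CLog. simpl. rewrite Carg_pos by auto. generalize (atan_bound (snd mu / fst mu)). lra.
Qed.

Definition c0 := exp (- Rabs (fst w)) * cos (Rabs (snd w)).

Lemma c0_pos : 0 < c0.
Proof.
  unfold c0. apply Rmult_lt_0_compat. apply exp_pos.
  assert (H := theta_bound). apply cos_gt_0; unfold Rabs; destruct Rcase_abs; lra.
Qed.

Lemma nu_re (u : R) : fst (nu u) = exp (u * fst w) * cos (u * snd w).
Proof. unfold nu, Cexp. simpl. f_equal; f_equal; ring. Qed.

Lemma nu_re_bound (u : R) : 0 <= u <= 1 -> c0 <= fst (nu u).
Proof.
  intro Hu. rewrite nu_re. unfold c0. assert (H := theta_bound).
  assert (Hc : cos (Rabs (snd w)) <= cos (u * snd w)).
  { replace (cos (u * snd w)) with (cos (u * Rabs (snd w))).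
    2: { unfold Rabs; destruct Rcase_abs; [rewrite <- cos_neg; f_equal; ring | reflexivity]. }
    assert (0 <= Rabs (snd w) < PI/2) by (unfold Rabs; destruct Rcase_abs; lra).
    assert (PI/2 < PI) by (generalize PI_RGT_0; lra).
    destruct (Req_dec (u * Rabs (snd w)) (Rabs (snd w))) as [E|E]. rewrite E; lra.
    left. apply cos_decreasing_1; nra. }
  apply Rmult_le_compat.
  - left; apply exp_pos.
  - left; apply cos_gt_0; unfold Rabs; destruct Rcase_abs; lra.
  - apply exp_le. unfold Rabs; destruct Rcase_abs; nra.
  - exact Hc.
Qed.

End Rot.

Section Rot2.
Variable s mu : C.

Lemma is_derive_lin (c : C) (u : R) :
  @is_derive R_AbsRing C_R_NormedModule (fun z => (RtoC z * c)%C) u c.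
Proof.
  eapply is_derive_eqv.
  apply (is_derive_ext (fun z => (c * RtoC z)%C)). intro; Cring.
  apply is_derive_Cconst_mult, is_derive_RtoC, Rderive_id.
  Cring.
Qed.

Lemma is_derive_nu (u : R) :
  @is_derive R_AbsRing C_R_NormedModule (nu mu) u (w mu * nu mu u)%C.
Proof.
  eapply is_derive_eqv. unfold nu. apply is_derive_Cexp, is_derive_lin. unfold nu; Cring.
Qed.

Definition G (u t : R) : C := gfun s (nu mu u) t.
Definition dG (u t : R) : C := (gfun s (nu mu u) t * (- (w mu * nu mu u * RtoC t)))%C.

Lemma is_derive_G (u t : R) :
  @is_derive R_AbsRing C_R_NormedModule (fun z => G z t) u (dG u t).
Proof.
  unfold G, dG, gfun. apply is_derive_Cexp.
  eapply is_derive_eqv.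
  apply (@is_derive_minus R_AbsRing C_R_NormedModule).
  apply (@is_derive_const R_AbsRing C_R_NormedModule).
  apply (is_derive_ext (fun z => (RtoC t * nu mu z)%C)). intro; Cring.
  apply is_derive_Cconst_mult, is_derive_nu.
  rewrite minusC. change (@zero C_R_NormedModule) with (RtoC 0). Cring.
Qed.

Lemma cont_nu_2 (x t : R) :
  @continuous (prod_UniformSpace R_UniformSpace R_UniformSpace) C_R_NormedModule
     (fun z : R * R => nu mu (fst z)) (x, t).
Proof.
  unfold nu. apply cont_Cexp. apply cont_Cmult. apply cont_RtoC.
  apply (@continuous_fst R_UniformSpace R_UniformSpace). apply cont_Cconst.
Qed.

Lemma cont_gfun_2 (a : C) (x t : R) : 0 < t ->
  @continuous (prod_UniformSpace R_UniformSpace R_UniformSpace) C_R_NormedModule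
     (fun z : R * R => gfun a (nu mu (fst z)) (snd z)) (x, t).
Proof.
  intro Ht. unfold gfun. apply cont_Cexp. apply cont_Cminus.
  - apply cont_Cmult. apply cont_Cconst. apply cont_RtoC.
    apply (continuous_comp (@snd R R) ln).
    apply (@continuous_snd R_UniformSpace R_UniformSpace). apply continuous_ln; auto.
  - apply cont_Cmult. apply cont_nu_2. apply cont_RtoC.
    apply (@continuous_snd R_UniformSpace R_UniformSpace).
Qed.

Lemma cont_dG (x t : R) : 0 < t ->
  @continuous (prod_UniformSpace R_UniformSpace R_UniformSpace) C_R_NormedModule
     (fun z : R * R => dG (fst z) (snd z)) (x, t).
Proof.
  intro Ht. unfold dG. apply cont_Cmult. apply cont_gfun_2; auto.
  apply cont_Copp. apply cont_Cmult. apply cont_Cmult. apply cont_Cconst. apply cont_nu_2.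
  apply cont_RtoC. apply (@continuous_snd R_UniformSpace R_UniformSpace).
Qed.

End Rot2.

Section Rot3.
Variable s mu : C.
Hypothesis Hs : 0 < fst s.
Hypothesis Hm : 0 < fst mu.

Definition psi (a b u : R) : C :=
  (RInt (fun t => fst (G s mu u t)) a b, RInt (fun t => snd (G s mu u t)) a b).

Definition psid (a b u : R) : C :=
  (RInt (fun t => fst (dG s mu u t)) a b, RInt (fun t => snd (dG s mu u t)) a b).

Lemma cont_nu_1 (u : R) :
  @continuous R_UniformSpace C_R_NormedModule (nu mu) u.
Proof.
  unfold nu. apply cont_Cexp. apply cont_Cmult. apply cont_RtoC. apply continuous_id.
  apply cont_Cconst.
Qed.

Lemma cont_dG_1 (u t : R) : 0 < t ->
  @continuous R_UniformSpace C_R_NormedModule (dG s mu u) t.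
Proof.
  intro Ht. unfold dG. apply cont_Cmult. apply continuous_gfun; auto.
  apply cont_Copp. apply cont_Cmult. apply cont_Cconst. apply cont_RtoC. apply continuous_id.
Qed.

Lemma psi_is_RInt (a b u : R) : 0 < a <= b ->
  @is_RInt C_R_NormedModule (G s mu u) a b (psi a b u).
Proof.
  intro Hab. apply is_RInt_pair. intros t Ht. rewrite Rmin_left in Ht by lra.
  apply continuous_gfun. lra.
Qed.

Lemma psid_is_RInt (a b u : R) : 0 < a <= b ->
  @is_RInt C_R_NormedModule (dG s mu u) a b (psid a b u).
Proof.
  intro Hab. apply is_RInt_pair. intros t Ht. rewrite Rmin_left in Ht by lra.
  apply cont_dG_1. lra.
Qed.

Lemma psi_derive (a b u : R) : 0 < a <= b ->
  @is_derive R_AbsRing C_R_NormedModule (psi a b) u (psid a b u).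
Proof.
  intro Hab. apply param_C; try lra.
  - intros; apply is_derive_G.
  - intros; apply cont_dG; auto.
  - intros; apply continuous_gfun; auto.
Qed.

Definition Dab (a b u : R) : C :=
  (gfun (s + 1) (nu mu u) b - gfun (s + 1) (nu mu u) a)%C.

Lemma psid_val (a b u : R) : 0 < a <= b ->
  psid a b u = (- w mu * (s * psi a b u - Dab a b u))%C.
Proof.
  intro Hab. set (v := nu mu u).
  assert (HI1 : @is_RInt C_R_NormedModule
     (fun t => (s * gfun s v t - v * gfun (s + 1) v t)%C) a b (Dab a b u)).
  { apply (@is_RInt_derive C_R_CompleteNormedModule (gfun (s + 1) v)).
    + intros t Ht. rewrite Rmin_left in Ht by lra. apply is_derive_gfun_succ. lra.
    + intros t Ht. rewrite Rmin_left in Ht by lra. apply continuous_gfun_comb. lra. }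
  assert (HI2 := is_RInt_Cmult _ _ _ _ s (psi_is_RInt a b u Hab)).
  assert (HI3 := @is_RInt_minus C_R_NormedModule _ _ _ _ _ _ HI2 HI1).
  assert (HI4 := is_RInt_Cmult _ _ _ _ (- w mu)%C HI3).
  assert (HI5 : @is_RInt C_R_NormedModule (dG s mu u) a b (- w mu * (s * psi a b u - Dab a b u))%C).
  { eapply is_RInt_ext; [|exact HI4].
    intros t Ht. rewrite Rmin_left, Rmax_right in Ht by lra.
    unfold dG, G. fold v. rewrite minusC.
    rewrite gfun_succ by lra. Cring. }
  rewrite <- (@is_RInt_unique C_R_CompleteNormedModule _ _ _ _ (psid_is_RInt a b u Hab)).
  rewrite <- (@is_RInt_unique C_R_CompleteNormedModule _ _ _ _ HI5). reflexivity.
Qed.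

End Rot3.

Section Rot4.
Variable s mu : C.
Hypothesis Hs : 0 < fst s.
Hypothesis Hm : 0 < fst mu.

Definition phi (a b u : R) : C := (Cexp (RtoC u * (s * w mu)) * psi s mu a b u)%C.
Definition phid (a b u : R) : C := (Cexp (RtoC u * (s * w mu)) * w mu * Dab s mu a b u)%C.

Lemma phi_derive (a b u : R) : 0 < a <= b ->
  @is_derive R_AbsRing C_R_NormedModule (phi a b) u (phid a b u).
Proof.
  intro Hab. eapply is_derive_eqv.
  apply is_derive_Cmult. apply is_derive_Cexp, is_derive_lin.
  apply psi_derive; auto.
  rewrite psid_val by auto. unfold phid. Cring.
Qed.

Lemma cont_gfun_u (a : C) (t u : R) :
  @continuous R_UniformSpace C_R_NormedModule (fun u => gfun a (nu mu u) t) u.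
Proof.
  unfold gfun. apply cont_Cexp. apply cont_Cminus. apply cont_Cconst.
  apply cont_Cmult. apply cont_nu_1. apply cont_Cconst.
Qed.

Lemma cont_phid (a b u : R) :
  @continuous R_UniformSpace C_R_NormedModule (phid a b) u.
Proof.
  unfold phid, Dab. apply cont_Cmult. apply cont_Cmult.
  apply cont_Cexp. apply cont_Cmult. apply cont_RtoC. apply continuous_id. apply cont_Cconst.
  apply cont_Cconst. apply cont_Cminus; apply cont_gfun_u.
Qed.

Lemma phi_diff (a b : R) : 0 < a <= b ->
  @is_RInt C_R_NormedModule (phid a b) 0 1 (phi a b 1 - phi a b 0)%C.
Proof.
  intro Hab. apply (@is_RInt_derive C_R_CompleteNormedModule (phi a b) (phid a b)).
  - intros; apply phi_derive; auto.
  - intros; apply cont_phid.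
Qed.

Definition Kab (a b : R) : R :=
  exp (Rabs (fst (s * w mu)%C)) * Cmod (w mu) *
  (exp (fst s * ln b - c0 mu * b) + exp (fst s * ln a)).

Lemma Cmod_gfun_nu (t u : R) : 0 < t -> 0 <= u <= 1 ->
  Cmod (gfun (s + 1) (nu mu u) t) <= exp (fst s * ln t - c0 mu * t).
Proof.
  intros Ht Hu. rewrite Cmod_gfun. apply exp_le.
  assert (H := nu_re_bound mu Hm u Hu).
  replace (fst (s + 1)%C) with (fst s + 1) by (simpl; ring).
  replace ((fst s + 1 - 1) * ln t) with (fst s * ln t) by ring.
  assert (c0 mu * t <= fst (nu mu u) * t) by (apply Rmult_le_compat_r; lra). lra.
Qed.

Lemma phid_bound (a b u : R) : 0 < a <= b -> 0 <= u <= 1 ->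
  Cmod (phid a b u) <= Kab a b.
Proof.
  intros Hab Hu. unfold phid, Kab, Dab. rewrite !Cmod_mult.
  apply Rmult_le_compat; try apply Rmult_le_pos; try apply Cmod_ge_0.
  - apply Rmult_le_compat_r. apply Cmod_ge_0.
    rewrite Cmod_Cexp. apply exp_le.
    replace (fst (RtoC u * (s * w mu))%C) with (u * fst (s * w mu)%C) by (simpl; ring).
    unfold Rabs; destruct Rcase_abs; nra.
  - eapply Rle_trans. 
    replace (gfun (s + 1) (nu mu u) b - gfun (s + 1) (nu mu u) a)%C
      with (gfun (s + 1) (nu mu u) b + - gfun (s + 1) (nu mu u) a)%C by Cring.
    apply Cmod_triangle. rewrite Cmod_opp.
    apply Rplus_le_compat. apply Cmod_gfun_nu; lra.
    eapply Rle_trans. apply Cmod_gfun_nu; lra. apply exp_le.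
    assert (H := c0_pos mu Hm). assert (0 <= c0 mu * a) by (apply Rmult_le_pos; lra). lra.
Qed.

Lemma phi_bound (a b : R) : 0 < a <= b ->
  Cmod (phi a b 1 - phi a b 0)%C <= Kab a b.
Proof.
  intro Hab. rewrite <- normC.
  replace (Kab a b) with ((1 - 0) * Kab a b) by ring.
  apply (norm_RInt_le_const (phid a b) 0 1). lra.
  intros u Hu. rewrite normC. apply phid_bound; auto.
  apply phi_diff; auto.
Qed.

End Rot4.

Lemma limi_le_zero {T} (F : (T -> Prop) -> Prop) (PF : ProperFilter F)
  (P : T -> C -> Prop) (K : T -> R) (l : C) :
  filterlimi P F (@locally C_R_NormedModule l) -> filterlim K F (locally 0) ->
  F (fun x => forall z, P x z -> Cmod z <= K x) -> l = RtoC 0.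
Proof.
  intros HP HK HB. apply Cmod_eq_0.
  destruct (Rle_lt_dec (Cmod l) 0) as [H|H]. generalize (Cmod_ge_0 l); lra.
  exfalso.
  assert (He : 0 < Cmod l / 4) by lra. set (e := mkposreal _ He).
  assert (HP' := proj1 (@filterlimi_locally T C_R_NormedModule F _ P l) HP e). clear HP. rename HP' into HP.
  apply filterlim_locally with (eps := e) in HK.
  destruct (filter_ex _ (filter_and _ _ HP (filter_and _ _ HK HB))) as [x [[z [Pz Bz]] [Kx Bx]]].
  assert (H1 := ballC _ _ _ Bz). specialize (Bx z Pz).
  change (Rabs (K x - 0) < e) in Kx. rewrite Rminus_0_r in Kx.
  apply Rabs_def2 in Kx. simpl in H1, Kx.
  assert (Cmod l <= Cmod z + Cmod (z - l)%C).
  { replace l with (z + - (z - l))%C at 1 by Cring.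
    eapply Rle_trans. apply Cmod_triangle. rewrite Cmod_opp. lra. }
  lra.
Qed.

Lemma lim_prod_sum (g1 g2 : R -> R) :
  filterlim g1 (at_right 0) (locally 0) ->
  filterlim g2 (Rbar_locally p_infty) (locally 0) ->
  filterlim (fun ab : R * R => g2 (snd ab) + g1 (fst ab))
     (filter_prod (at_right 0) (Rbar_locally p_infty)) (locally 0).
Proof.
  intros H1 H2. apply filterlim_locally. intro eps.
  assert (He : 0 < eps / 2) by (generalize (cond_pos eps); lra).
  set (e2 := mkposreal _ He).
  apply filterlim_locally with (eps := e2) in H1.
  apply filterlim_locally with (eps := e2) in H2.
  apply Filter_prod with (1 := H1) (2 := H2).
  intros a b Ha Hb. simpl.
  change (Rabs (g1 a - 0) < e2) in Ha. change (Rabs (g2 b - 0) < e2) in Hb.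
  change (Rabs (g2 b + g1 a - 0) < eps).
  rewrite Rminus_0_r in *. eapply Rle_lt_trans. apply Rabs_triang. simpl in *. lra.
Qed.

Theorem gfun_val (s mu : C) : 0 < fst s -> 0 < fst mu ->
  @is_RInt_gen C_R_NormedModule (gfun s mu) (at_right 0) (Rbar_locally p_infty)
    (CGamma s / Cpowc mu s)%C.
Proof.
  intros Hs Hm.
  assert (FA := at_right_proper_filter 0).
  assert (FB := Rbar_locally_filter p_infty).
  assert (FA0 : Filter (at_right 0)) by (destruct FA; auto).
  assert (FB0 : Filter (Rbar_locally p_infty)) by (destruct FB; auto).
  destruct (ex_gfun s mu Hs Hm) as [L1 HL1].
  destruct (ex_gfun s (RtoC 1) Hs ltac:(simpl; lra)) as [L0 HL0].
  assert (EG : CGamma s = L0).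
  { unfold CGamma.
    apply (@is_RInt_gen_unique C_R_CompleteNormedModule _ _ (Proper_StrongProper _ FA) (Proper_StrongProper _ FB)).
    eapply (@is_RInt_gen_ext C_R_NormedModule); [| | |exact HL0]. exact FA0. exact FB0.
    apply Filter_prod with (fun a => 0 < a) (fun b => 0 < b).
    apply at_right_pos. exists 0; auto.
    intros a b Ha Hb x Hx. simpl in Hx. rewrite gamma_integrand_eq. reflexivity.
    apply Rlt_trans with (Rmin a b); [apply Rmin_glb_lt; auto | apply Hx]. }
  assert (Hnz : Cpowc mu s <> RtoC 0) by (rewrite Cpowc_mu by auto; apply Cexp_neq0).
  set (h := fun t => (Cpowc mu s * gfun s mu t - gfun s (RtoC 1) t)%C).
  assert (Hh := @is_RInt_gen_minus C_R_NormedModule _ _ FA0 FB0 _ _ _ _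
                 (is_RInt_gen_Cmult _ _ _ _ (Cpowc mu s) FA0 FB0 HL1) HL0).
  assert (Z : (Cpowc mu s * L1 - L0)%C = RtoC 0).
  { apply (limi_le_zero _ (@filter_prod_proper _ _ _ _ FA FB)
      (fun ab z => @is_RInt C_R_NormedModule h (fst ab) (snd ab) z)
      (fun ab => Kab s mu (fst ab) (snd ab))).
    - exact Hh.
    - unfold Kab.
      apply (filterlim_ext (fun ab : R * R => (exp (Rabs (fst (s * w mu)%C)) * Cmod (w mu)) *
         (exp (fst s * ln (snd ab) - c0 mu * snd ab) + exp (fst s * ln (fst ab))))).
      intros; ring.
      apply lim_scal0. apply filter_prod_filter; auto.
      apply (lim_prod_sum (fun a => exp (fst s * ln a)) (fun b => exp (fst s * ln b - c0 mu * b))).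
      apply lim_pow_0; auto. apply lim_powexp_p. apply c0_pos; auto.
    - apply Filter_prod with (fun a => 0 < a /\ a < 1) (fun b => 1 < b).
      apply filter_and. apply at_right_pos. apply at_right_lt1. exists 1; auto.
      intros a b [Ha Ha'] Hb z Hz. simpl in Hz. simpl.
      assert (Hab : 0 < a <= b) by lra.
      assert (P1 := psi_is_RInt s mu a b 1 Hab).
      assert (P0 := psi_is_RInt s mu a b 0 Hab).
      assert (P1' : @is_RInt C_R_NormedModule (gfun s mu) a b (psi s mu a b 1)).
      { eapply is_RInt_ext; [|exact P1]. intros; unfold G; rewrite nu_1; auto. }
      assert (P0' : @is_RInt C_R_NormedModule (gfun s (RtoC 1)) a b (psi s mu a b 0)).
      { eapply is_RInt_ext; [|exact P0]. intros; unfold G; rewrite nu_0; auto. }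
      assert (Hz' := @is_RInt_minus C_R_NormedModule _ _ _ _ _ _ (is_RInt_Cmult _ _ _ _ (Cpowc mu s) P1') P0').
      rewrite <- (@is_RInt_unique C_R_CompleteNormedModule h a b z Hz).
      rewrite (@is_RInt_unique C_R_CompleteNormedModule h a b _ Hz').
      eapply Rle_trans; [|apply phi_bound; auto].
      right. f_equal. unfold phi. rewrite Cpowc_mu by auto.
      replace (RtoC 1 * (s * w mu))%C with (s * w mu)%C by Cring.
      replace (RtoC 0 * (s * w mu))%C with (RtoC 0) by Cring.
      rewrite Cexp_RtoC, exp_0. rewrite minusC. Cring. }
  rewrite EG.
  replace (L0 / Cpowc mu s)%C with L1. exact HL1.
  change C in L0, L1.
  assert (L0 = Cpowc mu s * L1)%C.
  { transitivity (Cpowc mu s * L1 - (Cpowc mu s * L1 - L0))%C. Cring. rewrite Z. Cring. }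
  rewrite H. Cfield. exact Hnz.
Qed.

Lemma RtoC_neq (x : R) : x <> 0 -> RtoC x <> RtoC 0.
Proof. intros H E. apply H. apply (f_equal fst) in E. exact E. Qed.

Lemma poch_nz (a : C) (n : nat) :
  (forall j, (j < n)%nat -> (a + RtoC (INR j))%C <> RtoC 0) -> poch a n <> RtoC 0.
Proof.
  induction n; intro H; cbn [poch].
  - apply RtoC_neq. lra.
  - apply Cmult_neq_0. apply IHn. intros; apply H; lia. apply H; lia.
Qed.

Lemma poch_shift1 (a : C) (n : nat) :
  (poch (a - 1) n * (a - 1 + RtoC (INR n)) = (a - 1) * poch a n)%C.
Proof.
  induction n; cbn [poch].
  - simpl. Cring.
  - rewrite S_INR, RtoC_plus.
    transitivity (poch (a - 1) n * (a - 1 + RtoC (INR n)) * (a + RtoC (INR n)))%C. Cring.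
    rewrite IHn. Cring.
Qed.

Lemma fact_nz (n : nat) : RtoC (INR (fact n)) <> RtoC 0.
Proof. apply RtoC_neq, INR_fact_neq_0. Qed.

Lemma fact_S_C (n : nat) : RtoC (INR (fact (S n))) = (RtoC (INR (fact n)) * (RtoC (INR n) + 1))%C.
Proof.
  change (fact (S n)) with (S n * fact n)%nat. rewrite mult_INR, S_INR, RtoC_mult, RtoC_plus.
  Cring.
Qed.

Section Alg.
Variable a b : C.
Definition cc := ((1 + a + b) / 2)%C.
Hypothesis Hc : forall k : nat, cc <> RtoC (- INR k).

Lemma cc_nz (k : nat) : (cc + RtoC (INR k))%C <> RtoC 0.
Proof.
  intro E. apply (Hc k). rewrite RtoC_opp.
  transitivity ((cc + RtoC (INR k)) - RtoC (INR k))%C. Cring. rewrite E. Cring.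
Qed.

Lemma poch_cc_nz (n : nat) : poch cc n <> RtoC 0.
Proof. apply poch_nz. intros; apply cc_nz. Qed.

Definition Tm (m n : nat) : C :=
  (poch (RtoC (- INR m)) n * poch a n /
   (poch (RtoC (- (2 * INR m))) n * poch cc n) * poch b n / RtoC (INR (fact n)))%C.

Lemma nm_nz (m j : nat) : (j < m)%nat -> (RtoC (- INR m) + RtoC (INR j))%C <> RtoC 0.
Proof.
  intro H. rewrite <- RtoC_plus. apply RtoC_neq. apply lt_INR in H. lra.
Qed.

Lemma n2m_nz (m j : nat) : (j < 2 * m)%nat -> (RtoC (- (2 * INR m)) + RtoC (INR j))%C <> RtoC 0.
Proof.
  intro H. rewrite <- RtoC_plus. apply RtoC_neq. apply lt_INR in H.
  rewrite mult_INR in H. simpl in H. lra.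
Qed.

Lemma poch_2m_nz (m n : nat) : (n <= 2 * m)%nat -> poch (RtoC (- (2 * INR m))) n <> RtoC 0.
Proof. intro H. apply poch_nz. intros; apply n2m_nz; lia. Qed.


Lemma T_succ_n (m k : nat) : (k < 2 * m)%nat ->
  Tm m (S k) = (Tm m k * ((RtoC (INR k) - RtoC (INR m)) * (a + RtoC (INR k)) * (b + RtoC (INR k))
       / ((RtoC (INR k) - 2 * RtoC (INR m)) * (cc + RtoC (INR k)) * (RtoC (INR k) + 1))))%C.
Proof.
  intro Hk. unfold Tm. cbn [poch]. rewrite fact_S_C.
  assert (N1 := poch_2m_nz m k ltac:(lia)).
  assert (N2 := poch_cc_nz k).
  assert (N3 := fact_nz k).
  assert (N4 := n2m_nz m k Hk).
  assert (N5 := cc_nz k).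
  assert (N6 : (RtoC (INR k) + 1)%C <> RtoC 0).
  { intro E. apply (f_equal fst) in E. simpl in E. generalize (pos_INR k); lra. }
  set (P1 := poch (RtoC (- INR m)) k) in *.
  set (P2 := poch (RtoC (- (2 * INR m))) k) in *.
  set (Pa := poch a k). set (Pb := poch b k). set (Pc := poch cc k) in *.
  set (F := RtoC (INR (fact k))) in *.
  replace (RtoC (- (2 * INR m))) with (- (2 * RtoC (INR m)))%C in *
    by (rewrite RtoC_opp, RtoC_mult; reflexivity).
  replace (RtoC (- INR m)) with (- RtoC (INR m))%C in * by (rewrite RtoC_opp; reflexivity).
  set (M := RtoC (INR m)) in *. set (K := RtoC (INR k)) in *.
  assert (N7 : (K - 2 * M)%C <> RtoC 0).
  { intro E. apply N4. transitivity (K - 2 * M)%C. Cring. exact E. }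
  Cfield. repeat split; auto.
Qed.

Lemma solve_div (x d e : C) : (x * d)%C = e -> d <> RtoC 0 -> x = (e / d)%C.
Proof. intros H Hd. rewrite <- H. Cfield. exact Hd. Qed.

Lemma T_succ_m (m k : nat) : (k <= m)%nat ->
  Tm (S m) k = (Tm m k * ((RtoC (INR m) + 1) * (2 * RtoC (INR m) + 1 - RtoC (INR k))
       * (2 * RtoC (INR m) + 2 - RtoC (INR k))
       / ((RtoC (INR m) + 1 - RtoC (INR k)) * (2 * RtoC (INR m) + 1) * (2 * RtoC (INR m) + 2))))%C.
Proof.
  intro Hk. unfold Tm. rewrite S_INR.
  assert (N1 := poch_2m_nz m k ltac:(lia)).
  assert (N2 := poch_cc_nz k).
  assert (N3 := fact_nz k).
  assert (Hk' := le_INR _ _ Hk). assert (Hp := pos_INR k).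
  replace (RtoC (- (INR m + 1))) with (RtoC (- INR m) - 1)%C
    by (rewrite !RtoC_opp, !RtoC_plus; Cring).
  replace (RtoC (- (2 * (INR m + 1)))) with (RtoC (- (2 * INR m)) - 1 - 1)%C
    by (rewrite !RtoC_opp, !RtoC_mult, !RtoC_plus; Cring).
  assert (E1 := poch_shift1 (RtoC (- INR m)) k).
  assert (E2 := poch_shift1 (RtoC (- (2 * INR m))) k).
  assert (E3 := poch_shift1 (RtoC (- (2 * INR m)) - 1)%C k).
  set (P1 := poch (RtoC (- INR m)) k) in *.
  set (Q1 := poch (RtoC (- INR m) - 1) k) in *.
  set (P2 := poch (RtoC (- (2 * INR m))) k) in *.
  set (Q2 := poch (RtoC (- (2 * INR m)) - 1) k) in *.
  set (Q3 := poch (RtoC (- (2 * INR m)) - 1 - 1) k) in *.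
  set (Pa := poch a k). set (Pb := poch b k). set (Pc := poch cc k) in *.
  set (F := RtoC (INR (fact k))) in *.
  replace (RtoC (- (2 * INR m))) with (- (2 * RtoC (INR m)))%C in *
    by (rewrite RtoC_opp, RtoC_mult; reflexivity).
  replace (RtoC (- INR m)) with (- RtoC (INR m))%C in * by (rewrite RtoC_opp; reflexivity).
  assert (D1 : (- RtoC (INR m) - 1 + RtoC (INR k))%C <> RtoC 0).
  { intro E. apply (f_equal fst) in E. simpl in E. lra. }
  assert (D2 : (- (2 * RtoC (INR m)) - 1 + RtoC (INR k))%C <> RtoC 0).
  { intro E. apply (f_equal fst) in E. simpl in E. lra. }
  assert (D3 : (- (2 * RtoC (INR m)) - 1 - 1 + RtoC (INR k))%C <> RtoC 0).
  { intro E. apply (f_equal fst) in E. simpl in E. lra. }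
  apply solve_div in E1; auto. apply solve_div in E2; auto. apply solve_div in E3; auto.
  rewrite E2 in E3. rewrite E1, E3.
  set (M := RtoC (INR m)) in *. set (K := RtoC (INR k)) in *.
  assert (D4 : (M + 1 - K)%C <> RtoC 0).
  { intro E. apply D1. transitivity (- (M + 1 - K))%C. Cring. rewrite E. Cring. }
  assert (D5 : (2 * M + 1)%C <> RtoC 0).
  { unfold M. intro E. apply (f_equal fst) in E. simpl in E. generalize (pos_INR m); lra. }
  assert (D6 : (2 * M + 2)%C <> RtoC 0).
  { unfold M. intro E. apply (f_equal fst) in E. simpl in E. generalize (pos_INR m); lra. }

  assert (D7 : (- (2 * M) - 1)%C <> RtoC 0).
  { unfold M. intro E. apply (f_equal fst) in E. simpl in E. generalize (pos_INR m); lra. }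
  assert (D8 : (- (2 * M) - 1 - 1)%C <> RtoC 0).
  { unfold M. intro E. apply (f_equal fst) in E. simpl in E. generalize (pos_INR m); lra. }
  Cfield. repeat split; auto.
Qed.

Definition Rm (m : nat) : C :=
  (((1 + a) / 2 + RtoC (INR m)) * ((1 + b) / 2 + RtoC (INR m)) / ((/ 2 + RtoC (INR m)) * (cc + RtoC (INR m))))%C.
Definition Km (m : nat) : C := (/ (2 * (2 * RtoC (INR m) + 1) * (cc + RtoC (INR m))))%C.
Definition Hm (m p : nat) : C := (Km m * (a + RtoC (INR p)) * (b + RtoC (INR p)) * Tm m p)%C.

Lemma Cnz_of (z : C) (x : R) : fst z = x -> x <> 0 -> z <> RtoC 0.
Proof. intros E Hx Hz. apply Hx. rewrite <- E, Hz. reflexivity. Qed.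

Lemma half_nz (x y : C) : (x / 2 + y)%C <> RtoC 0 -> (x + y * 2)%C <> RtoC 0.
Proof.
  assert (D : (2 : C) <> RtoC 0) by (apply (Cnz_of _ 2); [simpl; ring | lra]).
  intros H E. apply H. transitivity ((x + y * 2) / 2)%C.
  Cfield; auto. rewrite E. Cfield; auto.
Qed.

Lemma wz_step (m p : nat) : (1 <= m)%nat -> (S p <= m)%nat ->
  (Tm (S m) (S p) - Rm m * Tm m (S p) = Hm m p - Hm m (S p))%C.
Proof.
  intros Hm1 Hp. unfold Hm.
  rewrite T_succ_m by auto. rewrite T_succ_n by lia.
  rewrite S_INR, RtoC_plus.
  assert (Hle := le_INR _ _ Hp). rewrite S_INR in Hle.
  assert (Hm1' := le_INR _ _ Hm1). simpl in Hm1'.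
  assert (Hp0 := pos_INR p).
  assert (N1 := cc_nz p). assert (N2 := cc_nz m).
  set (T := Tm m p). unfold Rm, Km.
  set (M := RtoC (INR m)) in *. set (P := RtoC (INR p)) in *.
  assert (D1 : (P - 2 * M)%C <> RtoC 0) by (apply (Cnz_of _ (INR p - 2 * INR m)); [simpl; ring | lra]).
  assert (D2 : (P + 1)%C <> RtoC 0) by (apply (Cnz_of _ (INR p + 1)); [simpl; ring | lra]).
  assert (D3 : (M + 1 - (P + 1))%C <> RtoC 0) by (apply (Cnz_of _ (INR m - INR p)); [simpl; ring | lra]).
  assert (D4 : (2 * M + 1)%C <> RtoC 0) by (apply (Cnz_of _ (2 * INR m + 1)); [simpl; ring | lra]).
  assert (D5 : (2 * M + 2)%C <> RtoC 0) by (apply (Cnz_of _ (2 * INR m + 2)); [simpl; ring | lra]).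
  assert (D6 : (/ 2 + M)%C <> RtoC 0) by (apply (Cnz_of _ (/ 2 + INR m)); [simpl; field | lra]).
  assert (D7 : (2 : C) <> RtoC 0) by (apply (Cnz_of _ 2); [simpl; ring | lra]).
  unfold cc in *.
  Cfield. repeat split; auto using half_nz.
Qed.

Lemma Tm_0 (m : nat) : Tm m 0 = RtoC 1.
Proof.
  unfold Tm. cbn [poch fact]. change (INR 1) with 1.
  Cfield; try (repeat split; apply (Cnz_of _ 1); [simpl; ring | lra]).
Qed.

Lemma wz_base (m : nat) : (1 <= m)%nat ->
  (Tm (S m) 0 - Rm m * Tm m 0 = - Hm m 0)%C.
Proof.
  intro Hm1. unfold Hm. rewrite !Tm_0. unfold Rm, Km.
  assert (Hm1' := le_INR _ _ Hm1). simpl in Hm1'.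
  assert (N2 := cc_nz m).
  change (INR 0) with 0.
  set (M := RtoC (INR m)) in *.
  assert (D4 : (2 * M + 1)%C <> RtoC 0) by (apply (Cnz_of _ (2 * INR m + 1)); [simpl; ring | lra]).
  assert (D6 : (/ 2 + M)%C <> RtoC 0) by (apply (Cnz_of _ (/ 2 + INR m)); [simpl; field | lra]).
  assert (D7 : (2 : C) <> RtoC 0) by (apply (Cnz_of _ 2); [simpl; ring | lra]).
  unfold cc in *.
  Cfield. repeat split; auto using half_nz.
Qed.

Lemma wz_top (m : nat) : (1 <= m)%nat -> Tm (S m) (S m) = Hm m m.
Proof.
  intro Hm1. unfold Hm.
  rewrite T_succ_n by lia. rewrite T_succ_m by lia.
  rewrite S_INR, RtoC_plus.
  assert (Hm1' := le_INR _ _ Hm1). simpl in Hm1'.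
  assert (N2 := cc_nz m).
  set (T := Tm m m). unfold Km.
  set (M := RtoC (INR m)) in *.
  assert (D1 : (M - 2 * (M + 1))%C <> RtoC 0) by (apply (Cnz_of _ (- INR m - 2)); [simpl; ring | lra]).
  assert (D2 : (M + 1)%C <> RtoC 0) by (apply (Cnz_of _ (INR m + 1)); [simpl; ring | lra]).
  assert (D3 : (M + 1 - M)%C <> RtoC 0) by (apply (Cnz_of _ 1); [simpl; ring | lra]).
  assert (D4 : (2 * M + 1)%C <> RtoC 0) by (apply (Cnz_of _ (2 * INR m + 1)); [simpl; ring | lra]).
  assert (D5 : (2 * M + 2)%C <> RtoC 0) by (apply (Cnz_of _ (2 * INR m + 2)); [simpl; ring | lra]).
  assert (D7 : (2 : C) <> RtoC 0) by (apply (Cnz_of _ 2); [simpl; ring | lra]).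
  unfold cc in *.
  Cfield. repeat split; auto using half_nz.
Qed.

Definition sumC (f : nat -> C) (n : nat) : C := fold_right Cplus (RtoC 0) (map f (seq 0 n)).

Lemma fold_right_Cplus_acc (l : list C) (x : C) :
  fold_right Cplus x l = (fold_right Cplus (RtoC 0) l + x)%C.
Proof. induction l; simpl. Cring. rewrite IHl. Cring. Qed.

Lemma sumC_S (f : nat -> C) (n : nat) : sumC f (S n) = (sumC f n + f n)%C.
Proof.
  unfold sumC. rewrite seq_S, map_app, fold_right_app. simpl.
  rewrite fold_right_Cplus_acc. f_equal. Cring.
Qed.

Lemma sumC_lin (f g : nat -> C) (r : C) (n : nat) :
  sumC (fun k => f k - r * g k)%C n = (sumC f n - r * sumC g n)%C.
Proof.
  induction n. unfold sumC; simpl; Cring.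
  rewrite !sumC_S, IHn. Cring.
Qed.

Lemma telescope (m p : nat) : (1 <= m)%nat -> (p <= m)%nat ->
  sumC (fun k => Tm (S m) k - Rm m * Tm m k)%C (S p) = (- Hm m p)%C.
Proof.
  intros Hm1. induction p; intro Hp.
  - rewrite sumC_S. unfold sumC; simpl. rewrite wz_base by auto. Cring.
  - rewrite sumC_S, IHp by lia. rewrite wz_step by lia. Cring.
Qed.

Definition Ssum (m : nat) : C := sumC (Tm m) (S m).

Lemma Ssum_step (m : nat) : (1 <= m)%nat -> Ssum (S m) = (Rm m * Ssum m)%C.
Proof.
  intro Hm1. unfold Ssum. rewrite sumC_S, wz_top by auto.
  assert (E := telescope m m Hm1 (le_n m)). rewrite sumC_lin in E.
  transitivity ((sumC (Tm (S m)) (S m) - Rm m * sumC (Tm m) (S m)) + Rm m * sumC (Tm m) (S m) + Hm m m)%C.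
  Cring. rewrite E. Cring.
Qed.

Definition Qm (m : nat) : C :=
  (poch ((1 + a) / 2) m * poch ((1 + b) / 2) m / (poch (/ 2) m * poch cc m))%C.

Lemma Qm_step (m : nat) : Qm (S m) = (Qm m * Rm m)%C.
Proof.
  unfold Qm, Rm. cbn [poch].
  assert (N1 : poch (/ 2) m <> RtoC 0).
  { apply poch_nz. intros j _. apply (Cnz_of _ (/ 2 + INR j)). simpl; field.
    generalize (pos_INR j); lra. }
  assert (N2 := poch_cc_nz m). assert (N3 := cc_nz m).
  assert (D6 : (/ 2 + RtoC (INR m))%C <> RtoC 0).
  { apply (Cnz_of _ (/ 2 + INR m)). simpl; field. generalize (pos_INR m); lra. }
  assert (D8 : (1 + RtoC (INR m) * 2)%C <> RtoC 0).
  { apply (Cnz_of _ (1 + INR m * 2)). simpl; ring. generalize (pos_INR m); lra. }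
  Cfield. repeat split; auto.
Qed.

Lemma Ssum_1 : Ssum 1 = Qm 1.
Proof.
  unfold Ssum, Qm, sumC, Tm. cbn [seq map fold_right poch fact].
  change (INR 0) with 0. change (INR 1) with 1.
  assert (N3 := cc_nz 0). change (INR 0) with 0 in N3.
  assert (D7 : (2 : C) <> RtoC 0) by (apply (Cnz_of _ 2); [simpl; ring | lra]).
  unfold cc in *. change (INR (1 * 1)) with 1. rewrite !RtoC_opp, !RtoC_mult.
  assert (N4 : (1 + a + b)%C <> RtoC 0).
  { intro E. apply N3. rewrite E. Cfield; auto. }
  Cfield; repeat split; auto; try (apply (Cnz_of _ 1); [simpl; ring | lra]).
Qed.

Theorem watson (m : nat) : (1 <= m)%nat -> Ssum m = Qm m.
Proof.
  intro Hm1. induction m as [|m IH]. lia.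
  destruct (Nat.eq_dec m 0) as [E|E]. subst; apply Ssum_1.
  rewrite Ssum_step by lia. rewrite Qm_step, IH by lia. Cring.
Qed.

End Alg.

Lemma gfun_shift (s mu : C) (n : nat) : 0 < fst s -> 0 < fst mu ->
  @is_RInt_gen C_R_NormedModule (gfun (s + RtoC (INR n)) mu) (at_right 0) (Rbar_locally p_infty)
    (poch s n / Cpow mu n * (CGamma s / Cpowc mu s))%C.
Proof.
  intros Hs Hm.
  assert (Hmu : mu <> RtoC 0) by (apply (Cnz_of _ (fst mu)); [reflexivity | lra]).
  induction n.
  - replace (s + RtoC (INR 0))%C with s by (change (INR 0) with 0; Cring).
    replace (poch s 0 / Cpow mu 0 * (CGamma s / Cpowc mu s))%C with (CGamma s / Cpowc mu s)%C.
    apply gfun_val; auto.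
    cbn [poch Cpow].
    assert (Hcp : Cpowc mu s <> RtoC 0) by (rewrite Cpowc_mu by auto; apply Cexp_neq0).
    Cfield; repeat split; auto; try (apply (Cnz_of _ 1); [simpl; ring | lra]).
  - assert (Hsn : 0 < fst (s + RtoC (INR n))%C) by (simpl; generalize (pos_INR n); lra).
    destruct (ex_gfun (s + RtoC (INR n) + 1) mu) as [l1 Hl1]; [simpl; simpl in Hsn; lra | auto |].
    assert (E := gfun_rec (s + RtoC (INR n)) mu _ l1 Hsn Hm IHn Hl1).
    replace (s + RtoC (INR (S n)))%C with (s + RtoC (INR n) + 1)%C by (rewrite S_INR, RtoC_plus; Cring).
    replace (poch s (S n) / Cpow mu (S n) * (CGamma s / Cpowc mu s))%C with l1. exact Hl1.
    change C in l1. cbn [poch]. rewrite Cpow_S.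
    assert (E' : l1 = ((s + RtoC (INR n)) * (poch s n / Cpow mu n * (CGamma s / Cpowc mu s)) / mu)%C).
    { rewrite E. Cfield. auto. }
    rewrite E'.
    assert (Hpn := Cpow_nz mu n Hmu).
    assert (Hcp : Cpowc mu s <> RtoC 0) by (rewrite Cpowc_mu by auto; apply Cexp_neq0).
    Cfield. repeat split; auto.
Qed.

Lemma is_RInt_gen_zero (P : R -> C) :
  @is_RInt_gen C_R_NormedModule (fun t => (P t * RtoC 0)%C) (at_right 0) (Rbar_locally p_infty) (RtoC 0).
Proof.
  unfold is_RInt_gen.
  assert (FA := at_right_proper_filter 0).
  assert (FB := Rbar_locally_filter p_infty).
  assert (FA0 : Filter (at_right 0)) by (destruct FA; auto).
  assert (FB0 : Filter (Rbar_locally p_infty)) by (destruct FB; auto).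
  apply (@filterlimi_lim_ext _ _ _ _ (@filter_prod_filter _ _ _ _ FA0 FB0) (fun _ => RtoC 0)).
  - intros [a b]. simpl. eapply is_RInt_ext.
    2:{ eapply is_RInt_eqv. apply (@is_RInt_const C_R_NormedModule a b (RtoC 0)).
        rewrite scalC. Cring. }
    intros; simpl. Cring.
  - apply filterlim_const.
Qed.

Lemma is_RInt_gen_sum (P : R -> C) (T : nat -> R -> C) (v : nat -> C) (l : list nat) :
  (forall n, In n l -> @is_RInt_gen C_R_NormedModule (fun t => (P t * T n t)%C)
                          (at_right 0) (Rbar_locally p_infty) (v n)) ->
  @is_RInt_gen C_R_NormedModule
    (fun t => (P t * fold_right Cplus (RtoC 0) (map (fun n => T n t) l))%C)
    (at_right 0) (Rbar_locally p_infty) (fold_right Cplus (RtoC 0) (map v l)).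
Proof.
  assert (FA := at_right_proper_filter 0).
  assert (FB := Rbar_locally_filter p_infty).
  assert (FA0 : Filter (at_right 0)) by (destruct FA; auto).
  assert (FB0 : Filter (Rbar_locally p_infty)) by (destruct FB; auto).
  induction l as [|n l IH]; intro H.
  - simpl. apply is_RInt_gen_zero.
  - simpl.
    assert (H1 := H n (or_introl eq_refl)).
    assert (H2 := IH (fun k Hk => H k (or_intror Hk))).
    assert (H3 := @is_RInt_gen_plus C_R_NormedModule _ _ FA0 FB0 _ _ _ _ H1 H2).
    eapply (@is_RInt_gen_ext C_R_NormedModule); [exact FA0 | exact FB0 | | exact H3].
    apply filter_forall. intros ab x _. rewrite plusC. Cring.
Qed.

Lemma fold_map_scal (X : C) (f : nat -> C) (l : list nat) :
  fold_right Cplus (RtoC 0) (map (fun n => X * f n) l)%C = (X * fold_right Cplus (RtoC 0) (map f l))%C.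
Proof. induction l; simpl. Cring. rewrite IHl. Cring. Qed.

Theorem mainTheorem16 (m : nat) (alpha beta mu : C) :
  (1 <= m)%nat ->
  (forall k : nat, alpha <> RtoC (- INR k)) ->
  (forall k : nat, ((1 + alpha + beta) / 2)%C <> RtoC (- INR k)) ->
  (0 < Re beta)%R ->
  (0 < Re mu)%R ->
  @is_RInt_gen C_R_NormedModule
    (fun t : R =>
       (Cpowc (RtoC t) (beta - 1) * Cexp (- (mu * RtoC t))
        * F22_trunc (RtoC (- INR m)) alpha (RtoC (- (2 * INR m)))
            ((1 + alpha + beta) / 2) (mu * RtoC t) m)%C)
    (at_right 0) (Rbar_locally p_infty)
    (CGamma beta / Cpowc mu beta
     * (poch ((1 + alpha) / 2) m * poch ((1 + beta) / 2) m
        / (poch (/ 2) m * poch ((1 + alpha + beta) / 2) m)))%C.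
Proof.
  intros Hm1 Ha Hc Hb Hmu.
  unfold Re in Hb, Hmu.
  assert (FA := at_right_proper_filter 0).
  assert (FB := Rbar_locally_filter p_infty).
  assert (FA0 : Filter (at_right 0)) by (destruct FA; auto).
  assert (FB0 : Filter (Rbar_locally p_infty)) by (destruct FB; auto).
  assert (Hmu0 : mu <> RtoC 0) by (apply (Cnz_of _ (fst mu)); [reflexivity | lra]).
  set (X := (CGamma beta / Cpowc mu beta)%C).
  set (coef := fun n => (poch (RtoC (- INR m)) n * poch alpha n /
          (poch (RtoC (- (2 * INR m))) n * poch ((1 + alpha + beta) / 2) n) / RtoC (INR (fact n)))%C).
  assert (Hterm : forall n, @is_RInt_gen C_R_NormedModule
     (fun t => (Cpowc (RtoC t) (beta - 1) * Cexp (- (mu * RtoC t)) *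
        (poch (RtoC (- INR m)) n * poch alpha n /
          (poch (RtoC (- (2 * INR m))) n * poch ((1 + alpha + beta) / 2) n) *
          Cpow (mu * RtoC t) n / RtoC (INR (fact n))))%C)
     (at_right 0) (Rbar_locally p_infty)
     (coef n * Cpow mu n * (poch beta n / Cpow mu n * X))%C).
  { intro n.
    assert (H := is_RInt_gen_Cmult _ _ _ _ (coef n * Cpow mu n)%C FA0 FB0 (gfun_shift beta mu n Hb Hmu)).
    eapply (@is_RInt_gen_ext C_R_NormedModule); [exact FA0 | exact FB0 | | exact H].
    apply Filter_prod with (fun a => 0 < a) (fun b => 0 < b).
    apply at_right_pos. exists 0; auto.
    intros a b Ha0 Hb0 x Hx. simpl in Hx.
    assert (Hx0 : 0 < x) by (apply Rlt_trans with (Rmin a b); [apply Rmin_glb_lt; auto | apply Hx]).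
    rewrite integrand_eq by auto. rewrite <- gfun_pow by auto.
    rewrite Cpow_mult_l. unfold coef. set (Mn := Cpow mu n). set (Xn := Cpow (RtoC x) n). unfold Cdiv. Cring. }
  assert (HS := is_RInt_gen_sum (fun t => (Cpowc (RtoC t) (beta - 1) * Cexp (- (mu * RtoC t)))%C)
     (fun n t => (poch (RtoC (- INR m)) n * poch alpha n /
          (poch (RtoC (- (2 * INR m))) n * poch ((1 + alpha + beta) / 2) n) *
          Cpow (mu * RtoC t) n / RtoC (INR (fact n)))%C)
     (fun n => (coef n * Cpow mu n * (poch beta n / Cpow mu n * X))%C) (seq 0 (S m))
     (fun n _ => Hterm n)).
  replace (X * (poch ((1 + alpha) / 2) m * poch ((1 + beta) / 2) m
        / (poch (/ 2) m * poch ((1 + alpha + beta) / 2) m)))%C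
    with (fold_right Cplus (RtoC 0) (map (fun n => (coef n * Cpow mu n * (poch beta n / Cpow mu n * X))%C) (seq 0 (S m)))).
  - exact HS.
  - rewrite (map_ext (fun n => (coef n * Cpow mu n * (poch beta n / Cpow mu n * X))%C)
                     (fun n => (X * Tm alpha beta m n)%C)).
    + rewrite fold_map_scal. f_equal.
      assert (W := watson alpha beta Hc m Hm1). unfold Ssum, sumC, Qm, cc in W. exact W.
    + intro n. assert (Hpn := Cpow_nz mu n Hmu0).
      transitivity (coef n * poch beta n * X * (Cpow mu n * / Cpow mu n))%C.
      { set (Mn := Cpow mu n). unfold Cdiv. Cring. }
      rewrite Cinv_r by auto. unfold coef, Tm, cc. unfold Cdiv. Cring.
Qed.
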